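(* Let $\mathcal{E}$ be a right exact category and let $\mathcal{A}\subseteq\mathcal{E}$ be a right percolating subcategory. (1) The category $\mathrm{C}^b(\mathcal{E})$ of bounded cochain complexes has a natural right exact structure, in which a sequence of chain maps is a conflation iff it is a conflation in $\mathcal{E}$ in each degree. (2) With this structure, $\mathrm{C}^b(\mathcal{A})$ is a right percolating subcategory of $\mathrm{C}^b(\mathcal{E})$.
   Context: A conflation category is an additive category with a class of kernel-cokernel pairs (conflations; kernel part = inflation $\rightarrowtail$, cokernel part = deflation $\twoheadrightarrow$) closed under isomorphism. It is right exact if $1_0$ is a deflation, deflations compose, and pullbacks of deflations along arbitrary morphisms exist and are deflations. A non-empty full subcategory $\mathcal{A}$ of a conflation category $\mathcal{E}$ is right percolating if: (P1) for every conflation $A'\rightarrowtail A\twoheadrightarrow A''$, $A\in\mathcal{A}$ iff $A',A''\in\mathcal{A}$; (P2) every morphism $C\to A$ with $A\in\mathcal{A}$ factors as a deflation $C\twoheadrightarrow A'$ with $A'\in\mathcal{A}$ followed by a morphism $A'\to A$; (P3) for an inflation $C\rightarrowtail D$ and a deflation $C\twoheadrightarrow A$ with $A\in\mathcal{A}$, the pushout exists and the induced maps $A\to P$, $D\to P$ are an inflation and a deflation respectively; (P4) for every inflation $A\rightarrowtail X$ and deflation $X\twoheadrightarrow B$ with $A,B\in\mathcal{A}$ there are $A',B'\in\mathcal{A}$, deflations $A\twoheadrightarrow A'$, $X\twoheadrightarrow B'$, an inflation $A'\rightarrowtail B'$ and a morphism $B'\to B$ with $A\rightarrowtail X\twoheadrightarrow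 B'$ equal to $A\twoheadrightarrow A'\rightarrowtail B'$ and $X\twoheadrightarrow B$ equal to $X\twoheadrightarrow B'\to B$. *)

(* Defs.v *)
From Stdlib Require Import ZArith FunctionalExtensionality ProofIrrelevance.

Set Implicit Arguments.
Unset Strict Implicit.

(** * Categories (composition written diagrammatically: f ;; g = "f then g") *)
Record Cat := {
  Ob : Type;
  Hom : Ob -> Ob -> Type;
  comp : forall X Y Z : Ob, Hom X Y -> Hom Y Z -> Hom X Z;
  idm : forall X : Ob, Hom X X;
  comp_idl : forall X Y (f : Hom X Y), comp (idm X) f = f;
  comp_idr : forall X Y (f : Hom X Y), comp f (idm Y) = f;
  comp_assoc : forall X Y Z W (f : Hom X Y) (g : Hom Y Z) (h : Hom Z W),
      comp (comp f g) h = comp f (comp g h)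
}.
Arguments Hom {c} _ _.
Arguments comp {c X Y Z} _ _.
Arguments idm {c} X.

Notation "f ;; g" := (comp f g) (at level 40, left associativity).

Section CatDefs.
Variable C : Cat.

Definition is_initial (Z : Ob C) : Prop := forall Y : Ob C, exists! f : Hom Z Y, True.
Definition is_terminal (Z : Ob C) : Prop := forall Y : Ob C, exists! f : Hom Y Z, True.
Definition is_zero (Z : Ob C) : Prop := is_initial Z /\ is_terminal Z.

Definition zero_mor {X Y : Ob C} (f : Hom X Y) : Prop :=
  exists (Z : Ob C) (g : Hom X Z) (h : Hom Z Y), is_zero Z /\ f = g ;; h.

Definition is_iso {X Y : Ob C} (f : Hom X Y) : Prop :=
  exists g : Hom Y X, f ;; g = idm X /\ g ;; f = idm Y.

Definition is_biproduct (X Y S : Ob C) (i1 : Hom X S) (i2 : Hom Y S)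
  (p1 : Hom S X) (p2 : Hom S Y) : Prop :=
  i1 ;; p1 = idm X /\ i2 ;; p2 = idm Y /\ zero_mor (i1 ;; p2) /\ zero_mor (i2 ;; p1) /\
  (forall W (f : Hom W X) (g : Hom W Y), exists! u : Hom W S, u ;; p1 = f /\ u ;; p2 = g) /\
  (forall W (f : Hom X W) (g : Hom Y W), exists! u : Hom S W, i1 ;; u = f /\ i2 ;; u = g).

(** h = f + g, for the canonical (semi-additive) addition induced by biproducts. *)
Definition is_sum {X Y : Ob C} (f g h : Hom X Y) : Prop :=
  exists (S : Ob C) (i1 i2 : Hom Y S) (p1 p2 : Hom S Y) (dl : Hom X S) (nb : Hom S Y),
    is_biproduct i1 i2 p1 p2 /\ dl ;; p1 = f /\ dl ;; p2 = g /\
    i1 ;; nb = idm Y /\ i2 ;; nb = idm Y /\ h = dl ;; nb.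

(** Additive category (as a property of the category): zero object, binary
    biproducts, and the induced commutative monoids Hom(X,Y) are groups
    (equivalently, each identity has an additive inverse). *)
Definition additive : Prop :=
  (exists Z : Ob C, is_zero Z) /\
  (forall X Y : Ob C, exists S (i1 : Hom X S) (i2 : Hom Y S) (p1 : Hom S X) (p2 : Hom S Y),
      is_biproduct i1 i2 p1 p2) /\
  (forall X : Ob C, exists (n h : Hom X X), is_sum (idm X) n h /\ zero_mor h).

Definition is_kernel {A B D : Ob C} (i : Hom A B) (p : Hom B D) : Prop :=
  zero_mor (i ;; p) /\
  forall W (g : Hom W B), zero_mor (g ;; p) -> exists! u : Hom W A, u ;; i = g.

Definition is_cokernel {A B D : Ob C} (p : Hom B D) (i : Hom A B) : Prop :=
  zero_mor (i ;; p) /\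
  forall W (g : Hom B W), zero_mor (i ;; g) -> exists! u : Hom D W, p ;; u = g.

Definition kc_pair {A B D : Ob C} (i : Hom A B) (p : Hom B D) : Prop :=
  is_kernel i p /\ is_cokernel p i.

Definition seq_class : Type :=
  forall A B D : Ob C, Hom A B -> Hom B D -> Prop.

Definition is_pullback {P X Y Z : Ob C} (q1 : Hom P X) (q2 : Hom P Y)
  (f : Hom X Z) (g : Hom Y Z) : Prop :=
  q1 ;; f = q2 ;; g /\
  forall W (a : Hom W X) (b : Hom W Y), a ;; f = b ;; g ->
    exists! u : Hom W P, u ;; q1 = a /\ u ;; q2 = b.

Definition is_pushout {X Y Z P : Ob C} (f : Hom Z X) (g : Hom Z Y)
  (q1 : Hom X P) (q2 : Hom Y P) : Prop :=
  f ;; q1 = g ;; q2 /\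
  forall W (a : Hom X W) (b : Hom Y W), f ;; a = g ;; b ->
    exists! u : Hom P W, q1 ;; u = a /\ q2 ;; u = b.

Section WithConfl.
Variable Cf : seq_class.

Definition inflation {A B : Ob C} (i : Hom A B) : Prop :=
  exists (D : Ob C) (p : Hom B D), Cf i p.
Definition deflation {B D : Ob C} (p : Hom B D) : Prop :=
  exists (A : Ob C) (i : Hom A B), Cf i p.

Definition conflation_category : Prop :=
  additive /\
  (forall A B D (i : Hom A B) (p : Hom B D), Cf i p -> kc_pair i p) /\
  (forall A B D A' B' D' (i : Hom A B) (p : Hom B D) (i' : Hom A' B') (p' : Hom B' D')
     (a : Hom A A') (b : Hom B B') (d : Hom D D'),
     Cf i p -> is_iso a -> is_iso b -> is_iso d ->
     i ;; b = a ;; i' -> p ;; d = b ;; p' -> Cf i' p').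

Definition right_exact : Prop :=
  conflation_category /\
  (forall Z : Ob C, is_zero Z -> deflation (idm Z)) /\
  (forall X Y Z (p : Hom X Y) (q : Hom Y Z),
              deflation p -> deflation q -> deflation (p ;; q)) /\
  (forall B D D' (p : Hom B D) (f : Hom D' D), deflation p ->
              exists (P : Ob C) (q1 : Hom P B) (q2 : Hom P D'),
                is_pullback q1 q2 p f /\ deflation q2).

(** Right percolating subcategory, given as a predicate on objects
    (the full subcategory it spans). *)
Definition right_percolating (inA : Ob C -> Prop) : Prop :=
  (exists X, inA X) /\
  (forall A' A A'' (i : Hom A' A) (p : Hom A A''), Cf i p ->
              (inA A <-> (inA A' /\ inA A''))) /\
  (forall X A (f : Hom X A), inA A ->
              exists (A' : Ob C) (p : Hom X A') (g : Hom A' A),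
                inA A' /\ deflation p /\ f = p ;; g) /\
  (forall X D A (i : Hom X D) (p : Hom X A), inflation i -> deflation p -> inA A ->
              exists (P : Ob C) (a : Hom A P) (d : Hom D P),
                is_pushout p i a d /\ inflation a /\ deflation d) /\
  (forall A X B (a : Hom A X) (b : Hom X B), inA A -> inA B ->
              inflation a -> deflation b ->
              exists (A' B' : Ob C) (q : Hom A A') (r : Hom X B') (j : Hom A' B') (s : Hom B' B),
                inA A' /\ inA B' /\ deflation q /\ deflation r /\ inflation j /\
                a ;; r = q ;; j /\ b = r ;; s).

End WithConfl.
End CatDefs.

Section Complexes.
Variable C : Cat.

Record complex := {
  cx : Z -> Ob C;
  cd : forall n : Z, Hom (cx n) (cx (n + 1));
  cdd : forall n : Z, zero_mor (cd n ;; cd (n + 1))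
}.

Definition bounded (X : complex) : Prop :=
  exists a b : Z, forall n : Z, (n < a \/ b < n)%Z -> is_zero (cx X n).

Record bcomplex := { bc : complex; bc_bounded : bounded bc }.

Record chain_map (X Y : bcomplex) := {
  cm : forall n : Z, Hom (cx (bc X) n) (cx (bc Y) n);
  cm_comm : forall n : Z, cd (bc X) n ;; cm (n + 1) = cm n ;; cd (bc Y) n
}.

Lemma chain_map_ext (X Y : bcomplex) (f g : chain_map X Y) :
  (forall n, cm f n = cm g n) -> f = g.
Proof.
  destruct f as [f fc], g as [g gc]; simpl; intro H.
  assert (f = g) by (apply functional_extensionality_dep; exact H).
  subst g. f_equal. apply proof_irrelevance.
Qed.

Definition cm_id (X : bcomplex) : chain_map X X.
Proof.
  refine {| cm := fun n => idm (cx (bc X) n) |}.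
  intro n. now rewrite comp_idl, comp_idr.
Defined.

Definition cm_comp (X Y W : bcomplex) (f : chain_map X Y) (g : chain_map Y W) :
  chain_map X W.
Proof.
  refine {| cm := fun n => cm f n ;; cm g n |}.
  intro n. rewrite <- comp_assoc, (cm_comm f), comp_assoc, (cm_comm g), comp_assoc.
  reflexivity.
Defined.

Definition Cb : Cat.
Proof.
  refine {| Ob := bcomplex; Hom := chain_map; comp := cm_comp; idm := cm_id |}.
  - intros X Y f; apply chain_map_ext; intro n; simpl; apply comp_idl.
  - intros X Y f; apply chain_map_ext; intro n; simpl; apply comp_idr.
  - intros X Y W V f g h; apply chain_map_ext; intro n; simpl; apply comp_assoc.
Defined.

Definition cb_confl (Cf : seq_class C) : seq_class Cb :=
  fun X Y W (f : chain_map X Y) (g : chain_map Y W) =>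
    forall n : Z, Cf _ _ _ (cm f n) (cm g n).

Definition cb_sub (inA : Ob C -> Prop) : Ob Cb -> Prop :=
  fun X : bcomplex => forall n : Z, inA (cx (bc X) n).

End Complexes.

(* Main.v *)
Require Import Defs.
From Stdlib Require Import ZArith Lia FunctionalExtensionality ProofIrrelevance IndefiniteDescription Classical.


Definition cid {A : Type} {P : A -> Prop} (H : exists x, P x) : {x | P x} := constructive_indefinite_description P H.

Section Basic.
Context {C : Cat}.

Definition mono {X Y : Ob C} (f : Hom X Y) : Prop :=
  forall W (u v : Hom W X), u ;; f = v ;; f -> u = v.
Definition epi {X Y : Ob C} (f : Hom X Y) : Prop :=
  forall W (u v : Hom Y W), f ;; u = f ;; v -> u = v.

Lemma zero_from_eq {Z Y : Ob C} : is_zero Z -> forall f g : Hom Z Y, f = g.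
Proof. intros [Hi _] f g. destruct (Hi Y) as [u [_ Hu]].
  rewrite <- (Hu f I), <- (Hu g I). reflexivity. Qed.

Lemma zero_to_eq {X Z : Ob C} : is_zero Z -> forall f g : Hom X Z, f = g.
Proof. intros [_ Ht] f g. destruct (Ht X) as [u [_ Hu]].
  rewrite <- (Hu f I), <- (Hu g I). reflexivity. Qed.

Lemma zero_from {Z Y : Ob C} : is_zero Z -> exists f : Hom Z Y, True.
Proof. intros [Hi _]. destruct (Hi Y) as [u _]. eauto. Qed.
Lemma zero_to {X Z : Ob C} : is_zero Z -> exists f : Hom X Z, True.
Proof. intros [_ Ht]. destruct (Ht X) as [u _]. eauto. Qed.

Lemma zero_mor_eq {X Y : Ob C} (f g : Hom X Y) : zero_mor f -> zero_mor g -> f = g.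
Proof.
  intros [Z [a [b [HZ ->]]]] [Z' [c [d [HZ' ->]]]].
  destruct (zero_from (Y:=Z') HZ) as [u _].
  rewrite (zero_to_eq HZ' c (a ;; u)), (zero_from_eq HZ b (u ;; d)).
  now rewrite comp_assoc.
Qed.

Lemma zero_mor_l {X Y W : Ob C} (f : Hom X Y) (g : Hom Y W) : zero_mor f -> zero_mor (f ;; g).
Proof. intros [Z [a [b [HZ ->]]]]. exists Z, a, (b ;; g). split; auto. now rewrite comp_assoc. Qed.
Lemma zero_mor_r {X Y W : Ob C} (f : Hom X Y) (g : Hom Y W) : zero_mor g -> zero_mor (f ;; g).
Proof. intros [Z [a [b [HZ ->]]]]. exists Z, (f ;; a), b. split; auto. now rewrite comp_assoc. Qed.
Lemma zero_mor_src {X Y : Ob C} (f : Hom X Y) : is_zero X -> zero_mor f.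
Proof. intros H. exists X, (idm X), f. split; auto. now rewrite comp_idl. Qed.
Lemma zero_mor_tgt {X Y : Ob C} (f : Hom X Y) : is_zero Y -> zero_mor f.
Proof. intros H. exists Y, f, (idm Y). split; auto. now rewrite comp_idr. Qed.
Lemma zero_mor_thru {X Z Y : Ob C} (f : Hom X Z) (g : Hom Z Y) : is_zero Z -> zero_mor (f ;; g).
Proof. intros H. exists Z, f, g. auto. Qed.

Lemma retract_zero {Z W : Ob C} (u : Hom W Z) (v : Hom Z W) :
  is_zero Z -> u ;; v = idm W -> is_zero W.
Proof.
  intros HZ Huv. split.
  - intro Y. destruct (zero_from (Y:=Y) HZ) as [h _]. exists (u ;; h). split; auto.
    intros f _. rewrite <- (comp_idl f), <- Huv, comp_assoc.
    f_equal. apply zero_from_eq; auto.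
  - intro Y. destruct (zero_to (X:=Y) HZ) as [h _]. exists (h ;; v). split; auto.
    intros f _. rewrite <- (comp_idr f), <- Huv, <- comp_assoc.
    f_equal. apply zero_to_eq; auto.
Qed.

Lemma initial_zero {Z W : Ob C} : is_zero Z -> is_initial W -> is_zero W.
Proof.
  intros HZ HW. destruct (zero_to (X:=W) HZ) as [u _]. destruct (zero_from (Y:=W) HZ) as [v _].
  apply (retract_zero u v HZ).
  destruct (HW W) as [x [_ Hx]]. rewrite <- (Hx (u ;; v) I), <- (Hx (idm W) I). auto.
Qed.

Lemma terminal_zero {Z W : Ob C} : is_zero Z -> is_terminal W -> is_zero W.
Proof.
  intros HZ HW. destruct (zero_to (X:=W) HZ) as [u _]. destruct (zero_from (Y:=W) HZ) as [v _].
  apply (retract_zero u v HZ).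
  destruct (HW W) as [x [_ Hx]]. rewrite <- (Hx (u ;; v) I), <- (Hx (idm W) I). auto.
Qed.

Lemma mono_zero {Z W : Ob C} (i : Hom W Z) : is_zero Z -> mono i -> is_zero W.
Proof.
  intros HZ Hm. apply (terminal_zero HZ). intro Y.
  destruct (zero_to (X:=Y) HZ) as [a _]. destruct (zero_from (Y:=W) HZ) as [b _].
  exists (a ;; b). split; auto. intros f _. apply Hm. apply zero_to_eq; auto.
Qed.

Lemma epi_zero {Z W : Ob C} (p : Hom Z W) : is_zero Z -> epi p -> is_zero W.
Proof.
  intros HZ He. apply (initial_zero HZ). intro Y.
  destruct (zero_to (X:=W) HZ) as [a _]. destruct (zero_from (Y:=Y) HZ) as [b _].
  exists (a ;; b). split; auto. intros f _. apply He. apply zero_from_eq; auto.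
Qed.

Lemma mono_zm_zero {W Y : Ob C} (k : Hom W Y) : mono k -> zero_mor k -> is_zero W.
Proof.
  intros Hm Hz. destruct Hz as [Z [a [b [HZ Hk]]]].
  apply (terminal_zero HZ). intro V.
  destruct (zero_to (X:=V) HZ) as [x _]. destruct (zero_from (Y:=W) HZ) as [y _].
  exists (x ;; y). split; auto. intros f _. apply Hm.
  apply zero_mor_eq; apply zero_mor_r; rewrite Hk; apply zero_mor_thru; auto.
Qed.

Lemma epi_zm_zero {W Y : Ob C} (k : Hom Y W) : epi k -> zero_mor k -> is_zero W.
Proof.
  intros Hm Hz. destruct Hz as [Z [a [b [HZ Hk]]]].
  apply (initial_zero HZ). intro V.
  destruct (zero_to (X:=W) HZ) as [x _]. destruct (zero_from (Y:=V) HZ) as [y _].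
  exists (x ;; y). split; auto. intros f _. apply Hm.
  apply zero_mor_eq; apply zero_mor_l; rewrite Hk; apply zero_mor_thru; auto.
Qed.

Lemma zero_iso {U V : Ob C} (f : Hom U V) : is_zero U -> is_zero V -> is_iso f.
Proof.
  intros HU HV. destruct (zero_from (Y:=U) HV) as [g _]. exists g. split.
  apply zero_from_eq; auto. apply zero_from_eq; auto.
Qed.

Lemma iso_zero {U V : Ob C} (f : Hom U V) : is_iso f -> is_zero U -> is_zero V.
Proof. intros [g [H1 H2]] HU. exact (retract_zero g f HU H2). Qed.



Lemma kernel_mono {A B D : Ob C} (i : Hom A B) (p : Hom B D) : is_kernel i p -> mono i.
Proof.
  intros [H0 H] W u v Huv. destruct (H W (u ;; i)) as [w [_ Hw]].
  { rewrite comp_assoc. apply zero_mor_r; auto. }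
  rewrite <- (Hw u eq_refl). apply Hw. auto.
Qed.

Lemma cokernel_epi {A B D : Ob C} (p : Hom B D) (i : Hom A B) : is_cokernel p i -> epi p.
Proof.
  intros [H0 H] W u v Huv. destruct (H W (p ;; u)) as [w [_ Hw]].
  { rewrite <- comp_assoc. apply zero_mor_l; auto. }
  rewrite <- (Hw u eq_refl). apply Hw. auto.
Qed.

Lemma pullback_jm {P X Y Z : Ob C} (q1 : Hom P X) (q2 : Hom P Y) (f : Hom X Z) (g : Hom Y Z) :
  is_pullback q1 q2 f g -> forall W (u v : Hom W P), u ;; q1 = v ;; q1 -> u ;; q2 = v ;; q2 -> u = v.
Proof.
  intros [Hc H] W u v H1 H2. destruct (H W (u ;; q1) (u ;; q2)) as [w [_ Hw]].
  { rewrite !comp_assoc, Hc. auto. }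
  rewrite <- (Hw u (conj eq_refl eq_refl)). apply Hw. auto.
Qed.

Lemma pushout_je {X Y Z P : Ob C} (f : Hom Z X) (g : Hom Z Y) (q1 : Hom X P) (q2 : Hom Y P) :
  is_pushout f g q1 q2 -> forall W (u v : Hom P W), q1 ;; u = q1 ;; v -> q2 ;; u = q2 ;; v -> u = v.
Proof.
  intros [Hc H] W u v H1 H2. destruct (H W (q1 ;; u) (q2 ;; u)) as [w [_ Hw]].
  { rewrite <- !comp_assoc, Hc. auto. }
  rewrite <- (Hw u (conj eq_refl eq_refl)). apply Hw. auto.
Qed.

Lemma pullback_zero {P X Y Z : Ob C} (q1 : Hom P X) (q2 : Hom P Y) (f : Hom X Z) (g : Hom Y Z) :
  is_pullback q1 q2 f g -> is_zero X -> is_zero Y -> is_zero P.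
Proof.
  intros Hp HX HY. apply (terminal_zero HX). intro W.
  destruct (zero_to (X:=W) HX) as [a _]. destruct (zero_to (X:=W) HY) as [b _].
  destruct Hp as [Hc H]. destruct (H W a b) as [u [_ Hu]].
  { apply zero_mor_eq; apply zero_mor_r; apply zero_mor_src; auto. }
  exists u. split; auto. intros x _. apply (pullback_jm _ _ _ _ (conj Hc H)); apply zero_to_eq; auto.
Qed.

Lemma pushout_zero {X Y Z P : Ob C} (f : Hom Z X) (g : Hom Z Y) (q1 : Hom X P) (q2 : Hom Y P) :
  is_pushout f g q1 q2 -> is_zero X -> is_zero Y -> is_zero P.
Proof.
  intros Hp HX HY. apply (initial_zero HX). intro W.
  destruct (zero_from (Y:=W) HX) as [a _]. destruct (zero_from (Y:=W) HY) as [b _].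
  destruct Hp as [Hc H]. destruct (H W a b) as [u [_ Hu]].
  { apply zero_mor_eq; apply zero_mor_l; apply zero_mor_tgt; auto. }
  exists u. split; auto. intros x _. apply (pushout_je _ _ _ _ (conj Hc H)); apply zero_from_eq; auto.
Qed.

Lemma bp_jm {X Y S : Ob C} (i1 : Hom X S) (i2 : Hom Y S) (p1 : Hom S X) (p2 : Hom S Y) :
  is_biproduct i1 i2 p1 p2 -> forall W (u v : Hom W S), u ;; p1 = v ;; p1 -> u ;; p2 = v ;; p2 -> u = v.
Proof.
  intros (_ & _ & _ & _ & H & _) W u v H1 H2. destruct (H W (u ;; p1) (u ;; p2)) as [w [_ Hw]].
  rewrite <- (Hw u (conj eq_refl eq_refl)). apply Hw. auto.
Qed.

Lemma bp_je {X Y S : Ob C} (i1 : Hom X S) (i2 : Hom Y S) (p1 : Hom S X) (p2 : Hom S Y) :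
  is_biproduct i1 i2 p1 p2 -> forall W (u v : Hom S W), i1 ;; u = i1 ;; v -> i2 ;; u = i2 ;; v -> u = v.
Proof.
  intros (_ & _ & _ & _ & _ & H) W u v H1 H2. destruct (H W (i1 ;; u) (i2 ;; u)) as [w [_ Hw]].
  rewrite <- (Hw u (conj eq_refl eq_refl)). apply Hw. auto.
Qed.

Lemma bp_zero {X Y S : Ob C} (i1 : Hom X S) (i2 : Hom Y S) (p1 : Hom S X) (p2 : Hom S Y) :
  is_biproduct i1 i2 p1 p2 -> is_zero X -> is_zero Y -> is_zero S.
Proof.
  intros Hb HX HY. apply (terminal_zero HX). intro W.
  destruct (zero_to (X:=W) HX) as [a _]. destruct (zero_to (X:=W) HY) as [b _].
  pose proof Hb as (_ & _ & _ & _ & H & _). destruct (H W a b) as [u [_ Hu]].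
  exists u. split; auto. intros x _. apply (bp_jm _ _ _ _ Hb); apply zero_to_eq; auto.
Qed.

Lemma coker_iso {A P U V : Ob C} (a : Hom A P) (c : Hom P V) (t : Hom P U) :
  is_cokernel c a -> is_cokernel t a -> exists psi : Hom U V, is_iso psi /\ t ;; psi = c.
Proof.
  intros Hc Ht. pose proof (cokernel_epi _ _ Hc) as Ec. pose proof (cokernel_epi _ _ Ht) as Et.
  destruct Hc as [Hc0 Hc1], Ht as [Ht0 Ht1].
  destruct (Hc1 U t Ht0) as [phi [Hphi _]]. destruct (Ht1 V c Hc0) as [psi [Hpsi _]].
  exists psi. split; auto. exists phi. split.
  - apply Et. rewrite <- comp_assoc, Hpsi, Hphi, comp_idr. auto.
  - apply Ec. rewrite <- comp_assoc, Hphi, Hpsi, comp_idr. auto.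
Qed.

End Basic.

Record bprod (C : Cat) (X Y : Ob C) := {
  bS : Ob C; bi1 : Hom X bS; bi2 : Hom Y bS; bp1 : Hom bS X; bp2 : Hom bS Y;
  bpH : is_biproduct bi1 bi2 bp1 bp2 }.
Arguments bprod {C}. Arguments Build_bprod {C X Y bS bi1 bi2 bp1 bp2}.
Arguments bS {C X Y}. Arguments bi1 {C X Y}. Arguments bi2 {C X Y}.
Arguments bp1 {C X Y}. Arguments bp2 {C X Y}. Arguments bpH {C X Y}.

Section Add.
Context {C : Cat}.
Context {Z0 : Ob C}.
Hypothesis hZ0 : is_zero Z0.

Definition t0 (X : Ob C) : Hom X Z0 := proj1_sig (cid (zero_to (X:=X) hZ0)).
Definition f0 (Y : Ob C) : Hom Z0 Y := proj1_sig (cid (zero_from (Y:=Y) hZ0)).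
Definition zm (X Y : Ob C) : Hom X Y := t0 X ;; f0 Y.

Lemma zm_zero X Y : zero_mor (zm X Y).
Proof. apply zero_mor_thru; auto. Qed.
Lemma zero_zm {X Y} (f : Hom X Y) : zero_mor f -> f = zm X Y.
Proof. intros; apply zero_mor_eq; auto using zm_zero. Qed.

Section Bp.
Context {X Y : Ob C} {b : bprod X Y}.

Lemma bp_prod W (f : Hom W X) (g : Hom W Y) : exists! u : Hom W (bS b), u ;; bp1 b = f /\ u ;; bp2 b = g.
Proof. destruct (bpH b) as (_ & _ & _ & _ & H & _). apply H. Qed.
Lemma bp_coprod W (f : Hom X W) (g : Hom Y W) : exists! u : Hom (bS b) W, bi1 b ;; u = f /\ bi2 b ;; u = g.
Proof. destruct (bpH b) as (_ & _ & _ & _ & _ & H). apply H. Qed.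
Definition bpair {W} (f : Hom W X) (g : Hom W Y) : Hom W (bS b) := proj1_sig (cid (bp_prod W f g)).
Lemma pair_p1 {W} {f : Hom W X} {g : Hom W Y} : bpair f g ;; bp1 b = f.
Proof. exact (proj1 (proj1 (proj2_sig (cid (bp_prod W f g))))). Qed.
Lemma pair_p2 {W} {f : Hom W X} {g : Hom W Y} : bpair f g ;; bp2 b = g.
Proof. exact (proj2 (proj1 (proj2_sig (cid (bp_prod W f g))))). Qed.
Lemma pair_uniq {W} {f : Hom W X} {g : Hom W Y} {u : Hom W (bS b)} :
  u ;; bp1 b = f -> u ;; bp2 b = g -> u = bpair f g.
Proof. intros. apply (bp_jm _ _ _ _ (bpH b)); rewrite ?pair_p1, ?pair_p2; auto. Qed.

Definition bcopair {W} (f : Hom X W) (g : Hom Y W) : Hom (bS b) W := proj1_sig (cid (bp_coprod W f g)).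
Lemma copair_i1 {W} {f : Hom X W} {g : Hom Y W} : bi1 b ;; bcopair f g = f.
Proof. exact (proj1 (proj1 (proj2_sig (cid (bp_coprod W f g))))). Qed.
Lemma copair_i2 {W} {f : Hom X W} {g : Hom Y W} : bi2 b ;; bcopair f g = g.
Proof. exact (proj2 (proj1 (proj2_sig (cid (bp_coprod W f g))))). Qed.
Lemma copair_uniq {W} {f : Hom X W} {g : Hom Y W} {u : Hom (bS b) W} :
  bi1 b ;; u = f -> bi2 b ;; u = g -> u = bcopair f g.
Proof. intros. apply (bp_je _ _ _ _ (bpH b)); rewrite ?copair_i1, ?copair_i2; auto. Qed.

Lemma pair_comp {V W} {h : Hom V W} {f : Hom W X} {g : Hom W Y} :
  h ;; bpair f g = bpair (h ;; f) (h ;; g).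
Proof. apply pair_uniq; rewrite comp_assoc, ?pair_p1, ?pair_p2; auto. Qed.
Lemma copair_comp {V W} {h : Hom W V} {f : Hom X W} {g : Hom Y W} :
  bcopair f g ;; h = bcopair (f ;; h) (g ;; h).
Proof. apply copair_uniq; rewrite <- comp_assoc, ?copair_i1, ?copair_i2; auto. Qed.
End Bp.
Arguments bpair {X Y} b {W} f g. Arguments bcopair {X Y} b {W} f g.

Hypothesis HB : forall X Y : Ob C, exists S i1 i2 p1 p2, @is_biproduct C X Y S i1 i2 p1 p2.

Definition bpc (X Y : Ob C) : bprod X Y.
Proof.
  destruct (cid (HB X Y)) as [S H]. destruct (cid H) as [i1 H1]. destruct (cid H1) as [i2 H2].
  destruct (cid H2) as [p1 H3]. destruct (cid H3) as [p2 H4].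
  exact (Build_bprod H4).
Defined.

Definition add {X Y} (f g : Hom X Y) : Hom X Y :=
  bpair (bpc Y Y) f g ;; bcopair (bpc Y Y) (idm Y) (idm Y).
Definition add' {X Y} (f g : Hom X Y) : Hom X Y :=
  bpair (bpc X X) (idm X) (idm X) ;; bcopair (bpc X X) f g.

Lemma add_compl {V X Y} (h : Hom V X) (f g : Hom X Y) : h ;; add f g = add (h ;; f) (h ;; g).
Proof. unfold add. rewrite <- comp_assoc, pair_comp. auto. Qed.
Lemma add'_compr {X Y V} (h : Hom Y V) (f g : Hom X Y) : add' f g ;; h = add' (f ;; h) (g ;; h).
Proof. unfold add'. rewrite comp_assoc, copair_comp. auto. Qed.

Lemma add0r {X Y} (f : Hom X Y) : add f (zm X Y) = f.
Proof.
  unfold add. pose proof (bpH (bpc Y Y)) as (Hi1 & Hi2 & Hz1 & Hz2 & _).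
  rewrite <- (pair_uniq (u := f ;; bi1 (bpc Y Y))).
  - rewrite comp_assoc, copair_i1, comp_idr. auto.
  - rewrite comp_assoc, Hi1, comp_idr. auto.
  - apply zero_zm. rewrite comp_assoc. apply zero_mor_r. auto.
Qed.
Lemma add0l {X Y} (f : Hom X Y) : add (zm X Y) f = f.
Proof.
  unfold add. pose proof (bpH (bpc Y Y)) as (Hi1 & Hi2 & Hz1 & Hz2 & _).
  rewrite <- (pair_uniq (u := f ;; bi2 (bpc Y Y))).
  - rewrite comp_assoc, copair_i2, comp_idr. auto.
  - apply zero_zm. rewrite comp_assoc. apply zero_mor_r. auto.
  - rewrite comp_assoc, Hi2, comp_idr. auto.
Qed.
Lemma add'0r {X Y} (f : Hom X Y) : add' f (zm X Y) = f.
Proof.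
  unfold add'. pose proof (bpH (bpc X X)) as (Hi1 & Hi2 & Hz1 & Hz2 & _).
  rewrite <- (copair_uniq (u := bp1 (bpc X X) ;; f)).
  - rewrite <- comp_assoc, pair_p1, comp_idl. auto.
  - rewrite <- comp_assoc, Hi1, comp_idl. auto.
  - apply zero_zm. rewrite <- comp_assoc. apply zero_mor_l. auto.
Qed.
Lemma add'0l {X Y} (f : Hom X Y) : add' (zm X Y) f = f.
Proof.
  unfold add'. pose proof (bpH (bpc X X)) as (Hi1 & Hi2 & Hz1 & Hz2 & _).
  rewrite <- (copair_uniq (u := bp2 (bpc X X) ;; f)).
  - rewrite <- comp_assoc, pair_p2, comp_idl. auto.
  - apply zero_zm. rewrite <- comp_assoc. apply zero_mor_l. auto.
  - rewrite <- comp_assoc, Hi2, comp_idl. auto.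
Qed.

Lemma interchange {X Y} (a b c d : Hom X Y) :
  add' (add a b) (add c d) = add (add' a c) (add' b d).
Proof.
  unfold add' at 1. rewrite <- (copair_uniq (f := add a b) (g := add c d) (u := add (bcopair (bpc X X) a c) (bcopair (bpc X X) b d))).
  - rewrite add_compl. auto.
  - rewrite add_compl, !copair_i1. auto.
  - rewrite add_compl, !copair_i2. auto.
Qed.

Lemma add_add' {X Y} (f g : Hom X Y) : add f g = add' f g.
Proof.
  rewrite <- (add'0r f) at 1. rewrite <- (add'0l g) at 1.
  rewrite <- interchange, add0r, add0l. auto.
Qed.
Lemma add_comm {X Y} (f g : Hom X Y) : add f g = add g f.
Proof.
  rewrite add_add'. rewrite <- (add0l f) at 1. rewrite <- (add0r g) at 1.
  rewrite interchange, add'0l, add'0r. auto.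
Qed.
Lemma add_assoc {X Y} (f g h : Hom X Y) : add (add f g) h = add f (add g h).
Proof.
  rewrite (add_add' (add f g) h). rewrite <- (add0l h) at 1.
  rewrite interchange, add'0r, <- (add_add' g h). auto.
Qed.
Lemma add_compr {X Y V} (h : Hom Y V) (f g : Hom X Y) : add f g ;; h = add (f ;; h) (g ;; h).
Proof. rewrite !add_add'. apply add'_compr. Qed.

Lemma zm_compl {X Y V} (h : Hom Y V) : zm X Y ;; h = zm X V.
Proof. apply zero_zm, zero_mor_l, zm_zero. Qed.
Lemma zm_compr {X Y V} (h : Hom V X) : h ;; zm X Y = zm V Y.
Proof. apply zero_zm, zero_mor_r, zm_zero. Qed.

Lemma is_sum_add {X Y} (f g h : Hom X Y) : is_sum f g h -> h = add f g.
Proof.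
  intros (S & i1 & i2 & p1 & p2 & dl & nb & Hb & H1 & H2 & H3 & H4 & ->).
  pose proof Hb as (Hi1 & Hi2 & Hz1 & Hz2 & _).
  set (phi := bpair (bpc Y Y) p1 p2).
  assert (E1 : dl ;; phi = bpair (bpc Y Y) f g) by (unfold phi; rewrite pair_comp, H1, H2; auto).
  assert (E2 : phi ;; bcopair (bpc Y Y) (idm Y) (idm Y) = nb).
  { apply (bp_je _ _ _ _ Hb).
    - rewrite <- comp_assoc. unfold phi. rewrite pair_comp, Hi1, (zero_zm _ Hz1), H3.
      fold (add (idm Y) (zm Y Y)). apply add0r.
    - rewrite <- comp_assoc. unfold phi. rewrite pair_comp, Hi2, (zero_zm _ Hz2), H4.
      fold (add (zm Y Y) (idm Y)). apply add0l. }
  unfold add. rewrite <- E1, <- E2, comp_assoc. auto.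
Qed.

Lemma neg_nat {X Y} (d : Hom X Y) (nX : Hom X X) (nY : Hom Y Y) :
  add (idm X) nX = zm X X -> add (idm Y) nY = zm Y Y -> nX ;; d = d ;; nY.
Proof.
  intros HX HY.
  assert (Ea : add d (nX ;; d) = zm X Y).
  { rewrite <- (comp_idl d) at 1. rewrite <- add_compr, HX, zm_compl. auto. }
  assert (Eb : add d (d ;; nY) = zm X Y).
  { rewrite <- (comp_idr d) at 1. rewrite <- add_compl, HY, zm_compr. auto. }
  rewrite <- (add0r (nX ;; d)), <- Eb, <- add_assoc, (add_comm _ d), Ea, add0l. auto.
Qed.

End Add.
Arguments bpair {C X Y} b {W} f g. Arguments bcopair {C X Y} b {W} f g.
Arguments pair_p1 {C X Y b W f g}. Arguments pair_p2 {C X Y b W f g}.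
Arguments copair_i1 {C X Y b W f g}. Arguments copair_i2 {C X Y b W f g}.
Arguments pair_uniq {C X Y b W f g u}. Arguments copair_uniq {C X Y b W f g u}.
Arguments pair_comp {C X Y b V W h f g}. Arguments copair_comp {C X Y b V W h f g}.
Arguments is_sum_add {C Z0} hZ0 HB {X Y f g h} _.

Section Conf.
Context {C : Cat} {Cf : seq_class C}.
Hypothesis HRE : right_exact Cf.
Context {Z0 : Ob C}.
Hypothesis hZ0 : is_zero Z0.

Lemma conf_kc {A B D} {i : Hom A B} {p : Hom B D} : Cf _ _ _ i p -> kc_pair i p.
Proof. destruct HRE as [(_ & H & _) _]. apply H. Qed.

Lemma conf_iso {A B D A' B' D'} {i : Hom A B} {p : Hom B D} {i' : Hom A' B'} {p' : Hom B' D'}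
  {a : Hom A A'} {b : Hom B B'} {d : Hom D D'} :
  Cf _ _ _ i p -> is_iso a -> is_iso b -> is_iso d ->
  i ;; b = a ;; i' -> p ;; d = b ;; p' -> Cf _ _ _ i' p'.
Proof. destruct HRE as [(_ & _ & H) _]. apply H. Qed.

Lemma conf_mono {A B D} {i : Hom A B} {p : Hom B D} : Cf _ _ _ i p -> mono i.
Proof. intro H. apply (kernel_mono i p), (conf_kc H). Qed.
Lemma conf_epi {A B D} {i : Hom A B} {p : Hom B D} : Cf _ _ _ i p -> epi p.
Proof. intro H. apply (cokernel_epi p i), (conf_kc H). Qed.
Lemma infl_mono {A B} {i : Hom A B} : inflation Cf i -> mono i.
Proof. intros (D & p & H). exact (conf_mono H). Qed.
Lemma defl_epi {A B} {p : Hom A B} : deflation Cf p -> epi p.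
Proof. intros (D & i & H). exact (conf_epi H). Qed.

Lemma defl_comp {X Y Z} {p : Hom X Y} {q : Hom Y Z} : deflation Cf p -> deflation Cf q -> deflation Cf (p ;; q).
Proof. destruct HRE as (_ & _ & H & _). apply H. Qed.

Lemma defl_pullback {B D D'} (p : Hom B D) (f : Hom D' D) : deflation Cf p ->
  exists (P : Ob C) (q1 : Hom P B) (q2 : Hom P D'), is_pullback q1 q2 p f /\ deflation Cf q2.
Proof. destruct HRE as (_ & _ & _ & H). apply H. Qed.

Lemma idZ0_conf : exists K (i : Hom K Z0), Cf _ _ _ i (idm Z0).
Proof. destruct HRE as (_ & H & _). apply H; auto. Qed.

Lemma zz_defl {U V} (f : Hom U V) : is_zero U -> is_zero V -> deflation Cf f.
Proof.
  intros HU HV. destruct idZ0_conf as (K & i & Hc).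
  destruct (zero_from (Y:=U) hZ0) as [b _]. destruct (zero_from (Y:=V) hZ0) as [d _].
  exists K, (i ;; b). apply (conf_iso Hc (a := idm K) (b := b) (d := d)).
  - exists (idm K). split; apply comp_idl.
  - apply zero_iso; auto.
  - apply zero_iso; auto.
  - rewrite comp_idl; auto.
  - apply zero_from_eq; auto.
Qed.

Lemma zz_infl {U V} (f : Hom U V) : is_zero U -> is_zero V -> inflation Cf f.
Proof.
  intros HU HV. destruct idZ0_conf as (K & i & Hc).
  assert (HK : is_zero K) by (apply (mono_zero i hZ0), (conf_mono Hc)).
  destruct (zero_from (Y:=U) HK) as [a _]. destruct (zero_from (Y:=V) hZ0) as [b _].
  destruct (zero_to (X:=V) hZ0) as [p' _].
  exists Z0, p'. apply (conf_iso Hc (a := a) (b := b) (d := idm Z0)).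
  - apply zero_iso; auto.
  - apply zero_iso; auto.
  - apply zero_iso; auto.
  - apply zero_from_eq; auto.
  - apply zero_from_eq; auto.
Qed.

Lemma iso_conf {U V} (phi : Hom U V) : is_iso phi -> exists K (i : Hom K U), is_zero K /\ Cf _ _ _ i phi.
Proof.
  intros Hphi. destruct (zero_to (X:=U) hZ0) as [t _].
  destruct (defl_pullback (idm Z0) t) as (P & q1 & q2 & Hpb & Hq2).
  { apply zz_defl; auto. }
  destruct Hq2 as (K & k & Hk).
  pose proof Hpb as [Hc Hup].
  destruct (Hup U t (idm U)) as [w [[Hw1 Hw2] _]].
  { rewrite comp_idl, comp_idr. auto. }
  assert (Hqw : q2 ;; w = idm P).
  { apply (pullback_jm _ _ _ _ Hpb).
    - apply zero_to_eq; auto.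
    - rewrite comp_assoc, Hw2, comp_idr, comp_idl. auto. }
  assert (Hiso : is_iso q2) by (exists w; split; auto).
  assert (HK : is_zero K).
  { apply (mono_zm_zero k). apply (conf_mono Hk).
    assert (E : k = k ;; q2 ;; w) by (rewrite comp_assoc, Hqw, comp_idr; auto).
    rewrite E. apply zero_mor_l. apply (conf_kc Hk). }
  exists K, (k ;; q2). split; auto.
  apply (conf_iso Hk (a := idm K) (b := q2) (d := phi)); auto.
  - exists (idm K). split; apply comp_idl.
  - rewrite comp_idl; auto.
Qed.

End Conf.

Section CbBasic.
Context {E : Cat}.
Context {Z0 : Ob E}.
Hypothesis hZ0 : is_zero Z0.

Lemma cm_compE {X Y W : bcomplex E} (f : @Hom (Cb E) X Y) (g : @Hom (Cb E) Y W) n :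
  cm (f ;; g) n = cm f n ;; cm g n.
Proof. reflexivity. Qed.
Lemma cm_idE (X : bcomplex E) n : cm (@idm (Cb E) X) n = idm (cx (bc X) n).
Proof. reflexivity. Qed.
Lemma cm_eq {X Y : bcomplex E} {f g : @Hom (Cb E) X Y} : f = g -> forall n, cm f n = cm g n.
Proof. intros ->; auto. Qed.

Definition Z0cx : complex E.
Proof. refine {| cx := fun _ => Z0; cd := fun _ => idm Z0 |}. intro; apply zero_mor_src; auto. Defined.
Definition Z0c : bcomplex E.
Proof. refine {| bc := Z0cx |}. exists 0%Z, 0%Z. intros; simpl; auto. Defined.

Definition from_Z0c (Y : bcomplex E) : @Hom (Cb E) Z0c Y.
Proof. refine {| cm := fun n => f0 hZ0 (cx (bc Y) n) : Hom (cx (bc Z0c) n) _ |}.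
  intro; apply zero_from_eq; auto. Defined.
Definition to_Z0c (Y : bcomplex E) : @Hom (Cb E) Y Z0c.
Proof. refine {| cm := fun n => t0 hZ0 (cx (bc Y) n) : Hom _ (cx (bc Z0c) n) |}.
  intro; apply zero_to_eq; auto. Defined.

Lemma Z0c_zero : is_zero (C := Cb E) Z0c.
Proof.
  split; intro Y.
  - exists (from_Z0c Y). split; auto. intros g _. apply chain_map_ext. intro n. apply zero_from_eq; auto.
  - exists (to_Z0c Y). split; auto. intros g _. apply chain_map_ext. intro n. apply zero_to_eq; auto.
Qed.

Lemma cb_zero_deg (X : bcomplex E) : is_zero (C := Cb E) X -> forall n, is_zero (cx (bc X) n).
Proof.
  intros HX n.
  assert (H : to_Z0c X ;; from_Z0c X = @idm (Cb E) X) by (apply (@zero_from_eq (Cb E) X X HX)).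
  apply (retract_zero (cm (to_Z0c X) n) (cm (from_Z0c X) n) hZ0).
  exact (cm_eq H n).
Qed.

Lemma cb_zm_iff {X Y : bcomplex E} (f : @Hom (Cb E) X Y) :
  zero_mor f <-> forall n, zero_mor (cm f n).
Proof.
  split.
  - intros (Z & g & h & HZ & ->) n. rewrite cm_compE. apply zero_mor_thru. apply cb_zero_deg; auto.
  - intros H. exists Z0c, (to_Z0c X), (from_Z0c Y). split. apply Z0c_zero.
    apply chain_map_ext. intro n. apply zero_mor_eq; auto. rewrite cm_compE. apply zero_mor_thru; auto.
Qed.

Lemma cb_iso_deg {X Y : bcomplex E} (f : @Hom (Cb E) X Y) : is_iso f -> forall n, is_iso (cm f n).
Proof.
  intros [g [H1 H2]] n. exists (cm g n). split.
  - exact (cm_eq H1 n).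
  - exact (cm_eq H2 n).
Qed.

End CbBasic.

Section CbLift.
Context {E : Cat} {Cf : seq_class E}.
Hypothesis HRE : right_exact Cf.
Context {Z0 : Ob E}.
Hypothesis hZ0 : is_zero Z0.

Lemma mono_zero_mor {X Y W : Ob E} (f : Hom X Y) (i : Hom Y W) : mono i -> zero_mor (f ;; i) -> zero_mor f.
Proof.
  intros Hm Hz. assert (f = zm hZ0 X Y).
  { apply Hm. apply zero_mor_eq; auto. apply zero_mor_l, zm_zero. }
  subst. apply zm_zero.
Qed.
Lemma epi_zero_mor {X Y W : Ob E} (p : Hom X Y) (f : Hom Y W) : epi p -> zero_mor (p ;; f) -> zero_mor f.
Proof.
  intros Hm Hz. assert (f = zm hZ0 Y W).
  { apply Hm. apply zero_mor_eq; auto. apply zero_mor_r, zm_zero. }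
  subst. apply zm_zero.
Qed.

Lemma cb_bounded_zero (X : bcomplex E) : exists a b : Z, forall n, (n < a \/ b < n)%Z -> is_zero (cx (bc X) n).
Proof. exact (bc_bounded X). Qed.

Section KerLift.
Variables (Y W : bcomplex E) (p : @Hom (Cb E) Y W).
Hypothesis Hp : forall n, deflation Cf (cm p n).

Definition Kob (n : Z) : Ob E := proj1_sig (cid (Hp n)).
Definition Ki (n : Z) : Hom (Kob n) (cx (bc Y) n) := proj1_sig (cid (proj2_sig (cid (Hp n)))).
Lemma Ki_conf n : Cf _ _ _ (Ki n) (cm p n).
Proof. exact (proj2_sig (cid (proj2_sig (cid (Hp n))))). Qed.

Lemma dK_ex n : exists u : Hom (Kob n) (Kob (n + 1)), u ;; Ki (n + 1) = Ki n ;; cd (bc Y) n.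
Proof.
  destruct (conf_kc HRE (Ki_conf (n + 1))) as [[_ Hk] _].
  destruct (Hk _ (Ki n ;; cd (bc Y) n)) as [u [Hu _]]; eauto.
  rewrite comp_assoc, (cm_comm p), <- comp_assoc. apply zero_mor_l.
  apply (conf_kc HRE (Ki_conf n)).
Qed.
Definition dK n : Hom (Kob n) (Kob (n + 1)) := proj1_sig (cid (dK_ex n)).
Lemma dK_spec n : dK n ;; Ki (n + 1) = Ki n ;; cd (bc Y) n.
Proof. exact (proj2_sig (cid (dK_ex n))). Qed.

Lemma dK_dd n : zero_mor (dK n ;; dK (n + 1)).
Proof.
  apply (mono_zero_mor _ (Ki (n + 1 + 1))). apply (conf_mono HRE (Ki_conf _)).
  rewrite comp_assoc, dK_spec, <- comp_assoc, dK_spec, comp_assoc.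
  apply zero_mor_r. apply cdd.
Qed.

Definition Kcx : complex E := {| cx := Kob; cd := dK; cdd := dK_dd |}.
Lemma Kcx_bnd : bounded Kcx.
Proof.
  destruct (cb_bounded_zero Y) as (a & b & H). exists a, b. intros n Hn.
  apply (mono_zero (Ki n)); auto. apply (conf_mono HRE (Ki_conf _)).
Qed.
Definition Kc : bcomplex E := {| bc := Kcx; bc_bounded := Kcx_bnd |}.
Definition Kmap : @Hom (Cb E) Kc Y := {| cm := Ki : forall n, Hom (cx (bc Kc) n) _; cm_comm := dK_spec |}.

Lemma defl_lift : deflation (cb_confl Cf) p.
Proof. exists Kc, Kmap. intro n. apply Ki_conf. Qed.
End KerLift.

Section CokerLift.
Variables (A X : bcomplex E) (i : @Hom (Cb E) A X).
Hypothesis Hi : forall n, inflation Cf (cm i n).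

Definition Cob (n : Z) : Ob E := proj1_sig (cid (Hi n)).
Definition Cp (n : Z) : Hom (cx (bc X) n) (Cob n) := proj1_sig (cid (proj2_sig (cid (Hi n)))).
Lemma Cp_conf n : Cf _ _ _ (cm i n) (Cp n).
Proof. exact (proj2_sig (cid (proj2_sig (cid (Hi n))))). Qed.

Lemma dC_ex n : exists u : Hom (Cob n) (Cob (n + 1)), Cp n ;; u = cd (bc X) n ;; Cp (n + 1).
Proof.
  destruct (conf_kc HRE (Cp_conf n)) as [_ [_ Hk]].
  destruct (Hk _ (cd (bc X) n ;; Cp (n + 1))) as [u [Hu _]]; eauto.
  rewrite <- comp_assoc, <- (cm_comm i), comp_assoc. apply zero_mor_r.
  apply (conf_kc HRE (Cp_conf _)).
Qed.
Definition dC n : Hom (Cob n) (Cob (n + 1)) := proj1_sig (cid (dC_ex n)).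
Lemma dC_spec n : Cp n ;; dC n = cd (bc X) n ;; Cp (n + 1).
Proof. exact (proj2_sig (cid (dC_ex n))). Qed.

Lemma dC_dd n : zero_mor (dC n ;; dC (n + 1)).
Proof.
  apply (epi_zero_mor (Cp n)). apply (conf_epi HRE (Cp_conf _)).
  rewrite <- comp_assoc, dC_spec, comp_assoc, dC_spec, <- comp_assoc.
  apply zero_mor_l. apply cdd.
Qed.

Definition Ccx : complex E := {| cx := Cob; cd := dC; cdd := dC_dd |}.
Lemma Ccx_bnd : bounded Ccx.
Proof.
  destruct (cb_bounded_zero X) as (a & b & H). exists a, b. intros n Hn.
  apply (epi_zero (Cp n)); auto. apply (conf_epi HRE (Cp_conf _)).
Qed.
Definition Cc : bcomplex E := {| bc := Ccx; bc_bounded := Ccx_bnd |}.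
Lemma Cp_comm n : cd (bc X) n ;; Cp (n + 1) = Cp n ;; cd (bc Cc) n.
Proof. symmetry. apply dC_spec. Qed.
Definition Cmap : @Hom (Cb E) X Cc := {| cm := Cp : forall n, Hom _ (cx (bc Cc) n); cm_comm := Cp_comm |}.

Lemma infl_lift : inflation (cb_confl Cf) i.
Proof. exists Cc, Cmap. intro n. apply Cp_conf. Qed.
End CokerLift.

Lemma cb_defl_deg {Y W : bcomplex E} (p : @Hom (Cb E) Y W) : deflation (cb_confl Cf) p -> forall n, deflation Cf (cm p n).
Proof. intros (K & i & H) n. exists (cx (bc K) n), (cm i n). apply H. Qed.
Lemma cb_infl_deg {Y W : bcomplex E} (p : @Hom (Cb E) Y W) : inflation (cb_confl Cf) p -> forall n, inflation Cf (cm p n).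
Proof. intros (K & i & H) n. exists (cx (bc K) n), (cm i n). apply H. Qed.

End CbLift.

Local Open Scope Z_scope.
Section CbRE.
Context {E : Cat} {Cf : seq_class E}.
Hypothesis HRE : right_exact Cf.
Context {Z0 : Ob E}.
Hypothesis hZ0 : is_zero Z0.

Lemma HB_E : forall X Y : Ob E, exists S i1 i2 p1 p2, @is_biproduct E X Y S i1 i2 p1 p2.
Proof. exact (proj1 (proj2 (proj1 (proj1 HRE)))). Qed.
Lemma HN_E : forall X : Ob E, exists (n h : Hom X X), is_sum (idm X) n h /\ zero_mor h.
Proof. exact (proj2 (proj2 (proj1 (proj1 HRE)))). Qed.

Lemma chain_mono {V X Y : bcomplex E} (g : @Hom (Cb E) V Y) (i : @Hom (Cb E) X Y)
  (Hm : forall n, mono (cm i n)) (u : forall n, Hom (cx (bc V) n) (cx (bc X) n))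
  (Hu : forall n, u n ;; cm i n = cm g n) : forall n, cd (bc V) n ;; u (n + 1) = u n ;; cd (bc X) n.
Proof.
  intro n. apply Hm. rewrite !comp_assoc, (cm_comm i), !Hu, <- comp_assoc, Hu, (cm_comm g). auto.
Qed.
Lemma chain_epi {V X Y : bcomplex E} (g : @Hom (Cb E) Y V) (p : @Hom (Cb E) Y X)
  (Hm : forall n, epi (cm p n)) (u : forall n, Hom (cx (bc X) n) (cx (bc V) n))
  (Hu : forall n, cm p n ;; u n = cm g n) : forall n, cd (bc X) n ;; u (n + 1) = u n ;; cd (bc V) n.
Proof.
  intro n. apply Hm. rewrite <- !comp_assoc, <- (cm_comm p), !Hu, comp_assoc, Hu, (cm_comm g). auto.
Qed.

Lemma cb_kc {X Y W : bcomplex E} (i : @Hom (Cb E) X Y) (p : @Hom (Cb E) Y W) :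
  cb_confl Cf i p -> kc_pair (C := Cb E) i p.
Proof.
  intros H. split; split.
  - apply (cb_zm_iff hZ0 _). intro n. apply (conf_kc HRE (H n)).
  - intros V g Hg. rewrite (cb_zm_iff hZ0 _) in Hg.
    assert (Ex : forall n, exists u : Hom (cx (bc V) n) (cx (bc X) n), u ;; cm i n = cm g n).
    { intro n. destruct (conf_kc HRE (H n)) as [[_ Hk] _]. destruct (Hk _ (cm g n) (Hg n)) as [u [Hu _]]. eauto. }
    set (u := fun n => proj1_sig (cid (Ex n))).
    assert (Hu : forall n, u n ;; cm i n = cm g n) by (intro n; exact (proj2_sig (cid (Ex n)))).
    assert (Hm : forall n, mono (cm i n)) by (intro n; apply (conf_mono HRE (H n))).
    exists {| cm := u; cm_comm := chain_mono g i Hm u Hu |}. split.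
    + apply chain_map_ext. intro n. apply Hu.
    + intros u' Hu'. apply chain_map_ext. intro n. apply Hm. simpl. rewrite Hu. rewrite <- Hu'. auto.
  - apply (cb_zm_iff hZ0 _). intro n. apply (conf_kc HRE (H n)).
  - intros V g Hg. rewrite (cb_zm_iff hZ0 _) in Hg.
    assert (Ex : forall n, exists u : Hom (cx (bc W) n) (cx (bc V) n), cm p n ;; u = cm g n).
    { intro n. destruct (conf_kc HRE (H n)) as [_ [_ Hk]]. destruct (Hk _ (cm g n) (Hg n)) as [u [Hu _]]. eauto. }
    set (u := fun n => proj1_sig (cid (Ex n))).
    assert (Hu : forall n, cm p n ;; u n = cm g n) by (intro n; exact (proj2_sig (cid (Ex n)))).
    assert (Hm : forall n, epi (cm p n)) by (intro n; apply (conf_epi HRE (H n))).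
    exists {| cm := u; cm_comm := chain_epi g p Hm u Hu |}. split.
    + apply chain_map_ext. intro n. apply Hu.
    + intros u' Hu'. apply chain_map_ext. intro n. apply Hm. simpl. rewrite Hu. rewrite <- Hu'. auto.
Qed.

Lemma cb_iso_closed : forall (A B D A' B' D' : bcomplex E) (i : @Hom (Cb E) A B) (p : @Hom (Cb E) B D)
  (i' : @Hom (Cb E) A' B') (p' : @Hom (Cb E) B' D') (a : @Hom (Cb E) A A') (b : @Hom (Cb E) B B') (d : @Hom (Cb E) D D'),
  cb_confl Cf i p -> is_iso a -> is_iso b -> is_iso d -> i ;; b = a ;; i' -> p ;; d = b ;; p' -> cb_confl Cf i' p'.
Proof.
  intros A B D A' B' D' i p i' p' a b d H Ha Hb Hd H1 H2 n.
  apply (conf_iso HRE (H n) (cb_iso_deg _ Ha n) (cb_iso_deg _ Hb n) (cb_iso_deg _ Hd n) (cm_eq H1 n) (cm_eq H2 n)).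
Qed.

End CbRE.

Local Open Scope Z_scope.
Section CbBp.
Context {E : Cat}.
Context {Z0 : Ob E}.
Hypothesis hZ0 : is_zero Z0.
Hypothesis HB : forall X Y : Ob E, exists S i1 i2 p1 p2, @is_biproduct E X Y S i1 i2 p1 p2.

Lemma bp_zero_mor {X Y W : Ob E} (b : bprod X Y) (u : Hom W (bS b)) :
  zero_mor (u ;; bp1 b) -> zero_mor (u ;; bp2 b) -> zero_mor u.
Proof.
  intros H1 H2. assert (u = zm hZ0 _ _) as ->.
  { apply (bp_jm _ _ _ _ (bpH b)); apply zero_mor_eq; auto; apply zero_mor_l, zm_zero. }
  apply zm_zero.
Qed.

Section BpXY.
Variables X Y : bcomplex E.
Definition bpn (n : Z) : bprod (cx (bc X) n) (cx (bc Y) n) := bpc HB _ _.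
Definition dS (n : Z) : Hom (bS (bpn n)) (bS (bpn (n + 1))) :=
  bpair (bpn (n + 1)) (bp1 (bpn n) ;; cd (bc X) n) (bp2 (bpn n) ;; cd (bc Y) n).
Lemma dS_dd n : zero_mor (dS n ;; dS (n + 1)).
Proof.
  apply bp_zero_mor.
  - unfold dS at 2. rewrite comp_assoc, pair_p1, <- comp_assoc. unfold dS. rewrite pair_p1, comp_assoc.
    apply zero_mor_r, cdd.
  - unfold dS at 2. rewrite comp_assoc, pair_p2, <- comp_assoc. unfold dS. rewrite pair_p2, comp_assoc.
    apply zero_mor_r, cdd.
Qed.
Definition Scx : complex E := {| cx := fun n => bS (bpn n); cd := dS; cdd := dS_dd |}.
Lemma Scx_bnd : bounded Scx.
Proof.
  destruct (bc_bounded X) as (a1 & b1 & H1). destruct (bc_bounded Y) as (a2 & b2 & H2).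
  exists (Z.min a1 a2), (Z.max b1 b2). intros n Hn. simpl.
  apply (bp_zero _ _ _ _ (bpH (bpn n))); [apply H1 | apply H2]; lia.
Qed.
Definition Sc : bcomplex E := {| bc := Scx; bc_bounded := Scx_bnd |}.

Lemma i1_comm n : cd (bc X) n ;; bi1 (bpn (n + 1)) = bi1 (bpn n) ;; cd (bc Sc) n.
Proof.
  simpl. pose proof (bpH (bpn (n + 1))) as (Hi1 & Hi2 & Hz1 & Hz2 & _).
  pose proof (bpH (bpn n)) as (Hj1 & Hj2 & Hy1 & Hy2 & _).
  apply (bp_jm _ _ _ _ (bpH (bpn (n + 1)))); unfold dS; rewrite !comp_assoc, ?pair_p1, ?pair_p2.
  - rewrite Hi1, <- comp_assoc, Hj1, comp_idr, comp_idl. auto.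
  - apply zero_mor_eq. apply zero_mor_r; auto. rewrite <- comp_assoc. apply zero_mor_l; auto.
Qed.
Lemma i2_comm n : cd (bc Y) n ;; bi2 (bpn (n + 1)) = bi2 (bpn n) ;; cd (bc Sc) n.
Proof.
  simpl. pose proof (bpH (bpn (n + 1))) as (Hi1 & Hi2 & Hz1 & Hz2 & _).
  pose proof (bpH (bpn n)) as (Hj1 & Hj2 & Hy1 & Hy2 & _).
  apply (bp_jm _ _ _ _ (bpH (bpn (n + 1)))); unfold dS; rewrite !comp_assoc, ?pair_p1, ?pair_p2.
  - apply zero_mor_eq. apply zero_mor_r; auto. rewrite <- comp_assoc. apply zero_mor_l; auto.
  - rewrite Hi2, <- comp_assoc, Hj2, comp_idr, comp_idl. auto.
Qed.
Lemma p1_comm n : cd (bc Sc) n ;; bp1 (bpn (n + 1)) = bp1 (bpn n) ;; cd (bc X) n.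
Proof. simpl. unfold dS. apply pair_p1. Qed.
Lemma p2_comm n : cd (bc Sc) n ;; bp2 (bpn (n + 1)) = bp2 (bpn n) ;; cd (bc Y) n.
Proof. simpl. unfold dS. apply pair_p2. Qed.

Definition i1c : @Hom (Cb E) X Sc := {| cm := fun n => bi1 (bpn n) : Hom _ (cx (bc Sc) n); cm_comm := i1_comm |}.
Definition i2c : @Hom (Cb E) Y Sc := {| cm := fun n => bi2 (bpn n) : Hom _ (cx (bc Sc) n); cm_comm := i2_comm |}.
Definition p1c : @Hom (Cb E) Sc X := {| cm := fun n => bp1 (bpn n) : Hom (cx (bc Sc) n) _; cm_comm := p1_comm |}.
Definition p2c : @Hom (Cb E) Sc Y := {| cm := fun n => bp2 (bpn n) : Hom (cx (bc Sc) n) _; cm_comm := p2_comm |}.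

Lemma Sc_biprod : is_biproduct (C := Cb E) i1c i2c p1c p2c.
Proof.
  split; [|split; [|split; [|split; [|split]]]].
  - apply chain_map_ext. intro n. simpl. apply (bpH (bpn n)).
  - apply chain_map_ext. intro n. simpl. apply (bpH (bpn n)).
  - apply (cb_zm_iff hZ0 _). intro n. simpl. apply (bpH (bpn n)).
  - apply (cb_zm_iff hZ0 _). intro n. simpl. apply (bpH (bpn n)).
  - intros W f g.
    set (u := fun n => bpair (bpn n) (cm f n) (cm g n) : Hom (cx (bc W) n) (cx (bc Sc) n)).
    assert (Hc : forall n, cd (bc W) n ;; u (n + 1) = u n ;; cd (bc Sc) n).
    { intro n. apply (bp_jm _ _ _ _ (bpH (bpn (n + 1)))); unfold u; simpl; unfold dS;
        rewrite !comp_assoc, ?pair_p1, ?pair_p2, <- !comp_assoc, ?pair_p1, ?pair_p2; apply cm_comm. }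
    exists {| cm := u; cm_comm := Hc |}. split.
    + split; apply chain_map_ext; intro n; simpl; unfold u; [apply pair_p1 | apply pair_p2].
    + intros u' [H1 H2]. apply chain_map_ext. intro n. simpl. unfold u. symmetry. apply pair_uniq.
      exact (cm_eq H1 n). exact (cm_eq H2 n).
  - intros W f g.
    set (u := fun n => bcopair (bpn n) (cm f n) (cm g n) : Hom (cx (bc Sc) n) (cx (bc W) n)).
    assert (Hc : forall n, cd (bc Sc) n ;; u (n + 1) = u n ;; cd (bc W) n).
    { intro n. apply (bp_je _ _ _ _ (bpH (bpn n))).
      - rewrite <- !comp_assoc. pose proof (i1_comm n) as Hi. simpl in Hi. simpl. rewrite <- Hi.
        unfold u. rewrite comp_assoc, !copair_i1. apply cm_comm.
      - rewrite <- !comp_assoc. pose proof (i2_comm n) as Hi. simpl in Hi. simpl. rewrite <- Hi.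
        unfold u. rewrite comp_assoc, !copair_i2. apply cm_comm. }
    exists {| cm := u; cm_comm := Hc |}. split.
    + split; apply chain_map_ext; intro n; simpl; unfold u; [apply copair_i1 | apply copair_i2].
    + intros u' [H1 H2]. apply chain_map_ext. intro n. simpl. unfold u. symmetry. apply copair_uniq.
      exact (cm_eq H1 n). exact (cm_eq H2 n).
Qed.
End BpXY.

Hypothesis HN : forall X : Ob E, exists (n h : Hom X X), is_sum (idm X) n h /\ zero_mor h.

Lemma neg_ex (X : Ob E) : exists n : Hom X X, add HB (idm X) n = zm hZ0 X X.
Proof.
  destruct (HN X) as (n & h & Hs & Hz). exists n.
  rewrite <- (is_sum_add hZ0 HB Hs). apply zero_zm; auto.
Qed.
Definition negE (X : Ob E) : Hom X X := proj1_sig (cid (neg_ex X)).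
Lemma negE_spec X : add HB (idm X) (negE X) = zm hZ0 X X.
Proof. exact (proj2_sig (cid (neg_ex X))). Qed.

Lemma cb_additive : additive (Cb E).
Proof.
  split; [|split].
  - exists (Z0c hZ0). apply Z0c_zero.
  - intros X Y. exists (Sc X Y), (i1c X Y), (i2c X Y), (p1c X Y), (p2c X Y). apply Sc_biprod.
  - intros X.
    assert (Hc : forall n, cd (bc X) n ;; negE (cx (bc X) (n + 1)) = negE (cx (bc X) n) ;; cd (bc X) n).
    { intro n. symmetry. apply (neg_nat hZ0 HB); apply negE_spec. }
    set (nc := {| cm := fun n => negE (cx (bc X) n); cm_comm := Hc |} : @Hom (Cb E) X X).
    pose proof (Sc_biprod X X) as Hb.
    pose proof Hb as (_ & _ & _ & _ & Hp & Hcp).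
    destruct (Hp X (idm X) nc) as [dl [[Hd1 Hd2] _]].
    destruct (Hcp X (idm X) (idm X)) as [nb [[Hn1 Hn2] _]].
    exists nc, (dl ;; nb). split.
    + exists (Sc X X), (i1c X X), (i2c X X), (p1c X X), (p2c X X), dl, nb.
      exact (conj Hb (conj Hd1 (conj Hd2 (conj Hn1 (conj Hn2 eq_refl))))).
    + apply (cb_zm_iff hZ0 _). intro n. rewrite cm_compE.
      assert (Hs : is_sum (idm _) (negE (cx (bc X) n)) (cm dl n ;; cm nb n)).
      { exists _, (cm (i1c X X) n), (cm (i2c X X) n), (cm (p1c X X) n), (cm (p2c X X) n), (cm dl n), (cm nb n).
        exact (conj (bpH (bpn X X n)) (conj (cm_eq Hd1 n) (conj (cm_eq Hd2 n) (conj (cm_eq Hn1 n) (conj (cm_eq Hn2 n) eq_refl))))). }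
      rewrite (is_sum_add hZ0 HB Hs), negE_spec. apply zm_zero.
Qed.
End CbBp.

Local Open Scope Z_scope.
Section CbPb.
Context {E : Cat} {Cf : seq_class E}.
Hypothesis HRE : right_exact Cf.
Context {Z0 : Ob E}.
Hypothesis hZ0 : is_zero Z0.

Lemma pb_zero_mor {P X Y Z W : Ob E} (q1 : Hom P X) (q2 : Hom P Y) (f : Hom X Z) (g : Hom Y Z) (u : Hom W P) :
  is_pullback q1 q2 f g -> zero_mor (u ;; q1) -> zero_mor (u ;; q2) -> zero_mor u.
Proof.
  intros Hp H1 H2. assert (u = zm hZ0 _ _) as ->.
  { apply (pullback_jm _ _ _ _ Hp); apply zero_mor_eq; auto; apply zero_mor_l, zm_zero. }
  apply zm_zero.
Qed.
Lemma po_zero_mor {P X Y Z W : Ob E} (f : Hom Z X) (g : Hom Z Y) (q1 : Hom X P) (q2 : Hom Y P) (u : Hom P W) :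
  is_pushout f g q1 q2 -> zero_mor (q1 ;; u) -> zero_mor (q2 ;; u) -> zero_mor u.
Proof.
  intros Hp H1 H2. assert (u = zm hZ0 _ _) as ->.
  { apply (pushout_je _ _ _ _ Hp); apply zero_mor_eq; auto; apply zero_mor_r, zm_zero. }
  apply zm_zero.
Qed.

Section PbSec.
Variables (B D D' : bcomplex E) (p : @Hom (Cb E) B D) (f : @Hom (Cb E) D' D).
Hypothesis Hp : forall n, deflation Cf (cm p n).

Lemma pb_ex n : exists PQ : {P : Ob E & (Hom P (cx (bc B) n) * Hom P (cx (bc D') n))%type},
  is_pullback (fst (projT2 PQ)) (snd (projT2 PQ)) (cm p n) (cm f n) /\ deflation Cf (snd (projT2 PQ)).
Proof.
  destruct (defl_pullback HRE (cm p n) (cm f n) (Hp n)) as (P & q1 & q2 & H1 & H2).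
  exists (existT _ P (q1, q2)). simpl. auto.
Qed.
Definition PQ n := proj1_sig (cid (pb_ex n)).
Definition Pob n : Ob E := projT1 (PQ n).
Definition q1n n : Hom (Pob n) (cx (bc B) n) := fst (projT2 (PQ n)).
Definition q2n n : Hom (Pob n) (cx (bc D') n) := snd (projT2 (PQ n)).
Lemma pb_spec n : is_pullback (q1n n) (q2n n) (cm p n) (cm f n).
Proof. exact (proj1 (proj2_sig (cid (pb_ex n)))). Qed.
Lemma q2_defl n : deflation Cf (q2n n).
Proof. exact (proj2 (proj2_sig (cid (pb_ex n)))). Qed.

Lemma dP_ex n : exists u : Hom (Pob n) (Pob (n + 1)), u ;; q1n (n + 1) = q1n n ;; cd (bc B) n /\ u ;; q2n (n + 1) = q2n n ;; cd (bc D') n.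
Proof.
  destruct (pb_spec (n + 1)) as [_ H]. destruct (H _ (q1n n ;; cd (bc B) n) (q2n n ;; cd (bc D') n)) as [u [Hu _]]; eauto.
  rewrite !comp_assoc, !cm_comm, <- !comp_assoc. f_equal. apply (pb_spec n).
Qed.
Definition dP n := proj1_sig (cid (dP_ex n)).
Lemma dP_1 n : dP n ;; q1n (n + 1) = q1n n ;; cd (bc B) n.
Proof. exact (proj1 (proj2_sig (cid (dP_ex n)))). Qed.
Lemma dP_2 n : dP n ;; q2n (n + 1) = q2n n ;; cd (bc D') n.
Proof. exact (proj2 (proj2_sig (cid (dP_ex n)))). Qed.
Lemma dP_dd n : zero_mor (dP n ;; dP (n + 1)).
Proof.
  apply (pb_zero_mor _ _ _ _ _ (pb_spec (n + 1 + 1))).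
  - rewrite comp_assoc, dP_1, <- comp_assoc, dP_1, comp_assoc. apply zero_mor_r, cdd.
  - rewrite comp_assoc, dP_2, <- comp_assoc, dP_2, comp_assoc. apply zero_mor_r, cdd.
Qed.
Definition Pcx : complex E := {| cx := Pob; cd := dP; cdd := dP_dd |}.
Lemma Pcx_bnd : bounded Pcx.
Proof.
  destruct (bc_bounded B) as (a1 & b1 & H1). destruct (bc_bounded D') as (a2 & b2 & H2).
  exists (Z.min a1 a2), (Z.max b1 b2). intros n Hn. simpl.
  apply (pullback_zero _ _ _ _ (pb_spec n)); [apply H1 | apply H2]; lia.
Qed.
Definition Pc : bcomplex E := {| bc := Pcx; bc_bounded := Pcx_bnd |}.
Definition q1c : @Hom (Cb E) Pc B := {| cm := q1n : forall n, Hom (cx (bc Pc) n) _; cm_comm := dP_1 |}.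
Definition q2c : @Hom (Cb E) Pc D' := {| cm := q2n : forall n, Hom (cx (bc Pc) n) _; cm_comm := dP_2 |}.

Lemma Pc_pullback : is_pullback (C := Cb E) q1c q2c p f.
Proof.
  split.
  - apply chain_map_ext. intro n. apply (pb_spec n).
  - intros W a b Hab.
    assert (Ex : forall n, exists u : Hom (cx (bc W) n) (Pob n), u ;; q1n n = cm a n /\ u ;; q2n n = cm b n).
    { intro n. destruct (pb_spec n) as [_ H]. destruct (H _ (cm a n) (cm b n) (cm_eq Hab n)) as [u [Hu _]]. eauto. }
    set (u := fun n => proj1_sig (cid (Ex n))).
    assert (Hu1 : forall n, u n ;; q1n n = cm a n) by (intro n; exact (proj1 (proj2_sig (cid (Ex n))))).
    assert (Hu2 : forall n, u n ;; q2n n = cm b n) by (intro n; exact (proj2 (proj2_sig (cid (Ex n))))).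
    assert (Hc : forall n, cd (bc W) n ;; u (n + 1) = u n ;; cd (bc Pc) n).
    { intro n. apply (pullback_jm _ _ _ _ (pb_spec (n + 1))); simpl; rewrite !comp_assoc.
      - rewrite Hu1, dP_1, <- comp_assoc, Hu1. apply cm_comm.
      - rewrite Hu2, dP_2, <- comp_assoc, Hu2. apply cm_comm. }
    exists {| cm := u : forall n, Hom _ (cx (bc Pc) n); cm_comm := Hc |}. split.
    + split; apply chain_map_ext; intro n; simpl; auto.
    + intros u' [H1 H2]. apply chain_map_ext. intro n. simpl.
      apply (pullback_jm _ _ _ _ (pb_spec n)). rewrite Hu1. symmetry. exact (cm_eq H1 n).
      rewrite Hu2. symmetry. exact (cm_eq H2 n).
Qed.
End PbSec.

Theorem cb_right_exact : right_exact (cb_confl Cf).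
Proof.
  split; [split; [|split]|split; [|split]].
  - apply (cb_additive hZ0 (HB_E HRE) (HN_E HRE)).
  - intros A B D i p H. apply (cb_kc HRE hZ0 _ _ H).
  - apply (cb_iso_closed HRE).
  - intros Z HZ. apply (defl_lift HRE hZ0). intro n. apply (zz_defl HRE hZ0); apply (cb_zero_deg hZ0 _ HZ).
  - intros X Y Z p q Hp Hq. apply (defl_lift HRE hZ0). intro n. simpl.
    apply (defl_comp HRE); [apply (cb_defl_deg _ Hp) | apply (cb_defl_deg _ Hq)].
  - intros B D D' p f Hp. pose proof (cb_defl_deg _ Hp) as Hpn.
    exists (Pc _ _ _ p f Hpn), (q1c _ _ _ p f Hpn), (q2c _ _ _ p f Hpn). split.
    + apply Pc_pullback.
    + apply (defl_lift HRE hZ0). intro n. apply q2_defl.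
Qed.
End CbPb.

Local Open Scope Z_scope.

Section DownRec.
Variable D : Z -> Type.
Variable R : forall n, D n -> D (n + 1) -> Prop.
Variable N : Z.
Variable base : forall n, N <= n -> D n.
Hypothesis baseR : forall n h s, R n (base n h) s.
Hypothesis step : forall n (s : D (n + 1)), exists t, R n t s.

Definition stepf n (s : D (n + 1)) : D n := proj1_sig (cid (step n s)).

Lemma l0 n : N - n <= Z.of_nat 0 -> N <= n. Proof. lia. Qed.
Lemma lS n k : N - n <= Z.of_nat (S k) -> N - (n + 1) <= Z.of_nat k. Proof. lia. Qed.
Lemma lge n : ~ n < N -> N <= n. Proof. lia. Qed.

Fixpoint G (k : nat) : forall n, N - n <= Z.of_nat k -> D n :=
  match k with
  | O => fun n h => base n (l0 n h)
  | S k' => fun n h => match Z_lt_dec n N with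
      | left _ => stepf n (G k' (n + 1) (lS n k' h))
      | right hn => base n (lge n hn)
      end
  end.

Lemma G_irrel k : forall k' n h h', G k n h = G k' n h'.
Proof.
  induction k as [|k IH]; intros [|k'] n h h'; simpl.
  - f_equal. apply proof_irrelevance.
  - destruct (Z_lt_dec n N); [exfalso; pose proof (l0 n h); lia | f_equal; apply proof_irrelevance].
  - destruct (Z_lt_dec n N); [exfalso; pose proof (l0 n h'); lia | f_equal; apply proof_irrelevance].
  - destruct (Z_lt_dec n N); [f_equal; apply IH | f_equal; apply proof_irrelevance].
Qed.

Lemma lnat n : N - n <= Z.of_nat (Z.to_nat (N - n)). Proof. lia. Qed.
Definition data n : D n := G (Z.to_nat (N - n)) n (lnat n).

Lemma data_rel n : R n (data n) (data (n + 1)).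
Proof.
  destruct (Z_lt_dec n N) as [Hlt | Hge].
  - assert (Hk : N - n <= Z.of_nat (S (Z.to_nat (N - (n + 1))))) by lia.
    assert (E : data n = stepf n (data (n + 1))).
    { unfold data at 1. rewrite (G_irrel _ _ _ _ Hk). simpl. destruct (Z_lt_dec n N); [|lia].
      f_equal. apply G_irrel. }
    rewrite E. unfold stepf. exact (proj2_sig (cid (step n _))).
  - assert (Hk : N - n <= Z.of_nat 0) by lia.
    assert (E : data n = base n (l0 n Hk)).
    { unfold data at 1. rewrite (G_irrel _ 0 _ _ Hk). reflexivity. }
    rewrite E. apply baseR.
Qed.
End DownRec.

Lemma down_rec (D : Z -> Type) (R : forall n, D n -> D (n + 1) -> Prop) (N : Z)
  (base : forall n, N <= n -> D n) (baseR : forall n h s, R n (base n h) s)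
  (step : forall n (s : D (n + 1)), exists t, R n t s) :
  exists data : forall n, D n, forall n, R n (data n) (data (n + 1)).
Proof. exists (data D R N base step). apply data_rel. auto. Qed.

Section PercE.
Context {E : Cat} {Cf : seq_class E} {inA : Ob E -> Prop}.
Hypothesis HRE : right_exact Cf.
Hypothesis HP : right_percolating Cf inA.
Context {Z0 : Ob E}.
Hypothesis hZ0 : is_zero Z0.

Lemma P1E {A' A A''} (i : Hom A' A) (p : Hom A A'') : Cf _ _ _ i p -> (inA A <-> (inA A' /\ inA A'')).
Proof. destruct HP as (_ & H & _). apply H. Qed.
Lemma P2E {X A} (f : Hom X A) : inA A -> exists (A' : Ob E) (p : Hom X A') (g : Hom A' A),
  inA A' /\ deflation Cf p /\ f = p ;; g.
Proof. destruct HP as (_ & _ & H & _). apply H. Qed.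
Lemma P3E {X D A} (i : Hom X D) (p : Hom X A) : inflation Cf i -> deflation Cf p -> inA A ->
  exists (P : Ob E) (a : Hom A P) (d : Hom D P), is_pushout p i a d /\ inflation Cf a /\ deflation Cf d.
Proof. destruct HP as (_ & _ & _ & H & _). apply H. Qed.
Lemma P4E {A X B} (a : Hom A X) (b : Hom X B) : inA A -> inA B -> inflation Cf a -> deflation Cf b ->
  exists (A' B' : Ob E) (q : Hom A A') (r : Hom X B') (j : Hom A' B') (s : Hom B' B),
    inA A' /\ inA B' /\ deflation Cf q /\ deflation Cf r /\ inflation Cf j /\ a ;; r = q ;; j /\ b = r ;; s.
Proof. destruct HP as (_ & _ & _ & _ & H). apply H. Qed.

Lemma zeroA : exists Z1, is_zero Z1 /\ inA Z1.
Proof.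
  destruct HP as ((X & HX) & _). destruct (zero_from (Y := X) hZ0) as [f _].
  destruct (P2E f HX) as (A' & p & g & HA & Hp & _).
  exists A'. split; auto. apply (epi_zero p hZ0). apply (defl_epi HRE Hp).
Qed.

Lemma isoA {U V} (phi : Hom U V) : is_iso phi -> inA U -> inA V.
Proof.
  intros Hphi HU. destruct (iso_conf HRE hZ0 phi Hphi) as (K & i & HK & Hc).
  destruct zeroA as (Z1 & HZ1 & HA1).
  destruct (zero_from (Y := Z1) HK) as [a _]. destruct (zero_from (Y := K) HZ1) as [ainv _].
  assert (Hc' : Cf _ _ _ (ainv ;; i) phi).
  { apply (conf_iso HRE Hc (a := a) (b := idm U) (d := idm V)).
    - apply zero_iso; auto.
    - exists (idm U). split; apply comp_idl.
    - exists (idm V). split; apply comp_idl.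
    - rewrite <- comp_assoc, (zero_from_eq HK (a ;; ainv) (idm K)), comp_idl, comp_idr. auto.
    - rewrite comp_idl, comp_idr. auto. }
  apply (P1E _ _ Hc'). auto.
Qed.

Lemma zero_inA {U} : is_zero U -> inA U.
Proof.
  intros HU. destruct zeroA as (Z1 & HZ1 & HA1).
  destruct (zero_from (Y := U) HZ1) as [a _]. apply (isoA a); auto. apply zero_iso; auto.
Qed.

Lemma epi_comp_r {X Y W : Ob E} (d : Hom X Y) (t : Hom Y W) : epi (d ;; t) -> epi t.
Proof. intros H V y z Hyz. apply H. rewrite !comp_assoc, Hyz. auto. Qed.

Lemma join {X A1 A2} (f1 : Hom X A1) (f2 : Hom X A2) : inA A1 -> inA A2 ->
  exists W (w : Hom X W) (h1 : Hom W A1) (h2 : Hom W A2),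
    inA W /\ deflation Cf w /\ w ;; h1 = f1 /\ w ;; h2 = f2.
Proof.
  intros HA1 HA2.
  destruct (P2E f2 HA2) as (U & u & g2 & HU & Hu & Hf2).
  destruct Hu as (K & k & Hku).
  destruct (P2E (k ;; f1) HA1) as (A'' & v & h & HA'' & Hv & Hkf).
  destruct (P3E k v (ex_intro _ U (ex_intro _ u Hku)) Hv HA'') as (P & a & d & Hpo & Ha & Hd).
  pose proof Hpo as [Hpc Hup].
  destruct (Hup _ h f1) as [h1 [[Hh1a Hh1d] _]]. { rewrite Hkf. auto. }
  destruct (Hup _ (zm hZ0 A'' U) u) as [t [[Hta Htd] _]].
  { apply zero_mor_eq. apply zero_mor_r, zm_zero. apply (conf_kc HRE Hku). }
  exists P, d, h1, (t ;; g2). split; [|split; [|split]]; auto.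
  2: { rewrite <- comp_assoc, Htd. auto. }
  destruct Ha as (Cc & c & Hac).
  assert (Hte : epi t) by (apply (epi_comp_r d); rewrite Htd; apply (conf_epi HRE Hku)).
  assert (Hcok : is_cokernel t a).
  { split. rewrite Hta. apply zm_zero.
    intros V g Hg.
    destruct (conf_kc HRE Hku) as [_ [_ Hcu]].
    destruct (Hcu V (d ;; g)) as [x [Hx _]].
    { rewrite <- comp_assoc, <- Hpc, comp_assoc. apply zero_mor_r; auto. }
    exists x. split.
    - apply (defl_epi HRE Hd). rewrite <- comp_assoc, Htd. auto.
    - intros x' Hx'. apply Hte. rewrite Hx'. apply (defl_epi HRE Hd). rewrite <- comp_assoc, Htd. auto. }
  destruct (coker_iso a c t (proj2 (conf_kc HRE Hac)) Hcok) as (psi & Hpsi & _).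
  apply (P1E _ _ Hac). split; auto. apply (isoA psi); auto.
Qed.
End PercE.

Local Open Scope Z_scope.
Section CbPo.
Context {E : Cat} {Cf : seq_class E} {inA : Ob E -> Prop}.
Hypothesis HRE : right_exact Cf.
Hypothesis HP : right_percolating Cf inA.
Context {Z0 : Ob E}.
Hypothesis hZ0 : is_zero Z0.

Section PoSec.
Variables (X D A : bcomplex E) (i : @Hom (Cb E) X D) (p : @Hom (Cb E) X A).
Hypothesis Hi : forall n, inflation Cf (cm i n).
Hypothesis Hp : forall n, deflation Cf (cm p n).
Hypothesis HA : forall n, inA (cx (bc A) n).

Lemma po_ex n : exists PQ : {P : Ob E & (Hom (cx (bc A) n) P * Hom (cx (bc D) n) P)%type},
  is_pushout (cm p n) (cm i n) (fst (projT2 PQ)) (snd (projT2 PQ)) /\ inflation Cf (fst (projT2 PQ)) /\ deflation Cf (snd (projT2 PQ)).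
Proof.
  destruct (P3E HP (cm i n) (cm p n) (Hi n) (Hp n) (HA n)) as (P & a & d & H1 & H2 & H3).
  exists (existT _ P (a, d)). simpl. auto.
Qed.
Definition PoQ n := proj1_sig (cid (po_ex n)).
Definition Poob n : Ob E := projT1 (PoQ n).
Definition an n : Hom (cx (bc A) n) (Poob n) := fst (projT2 (PoQ n)).
Definition dn n : Hom (cx (bc D) n) (Poob n) := snd (projT2 (PoQ n)).
Lemma po_spec n : is_pushout (cm p n) (cm i n) (an n) (dn n).
Proof. exact (proj1 (proj2_sig (cid (po_ex n)))). Qed.
Lemma an_infl n : inflation Cf (an n).
Proof. exact (proj1 (proj2 (proj2_sig (cid (po_ex n))))). Qed.
Lemma dn_defl n : deflation Cf (dn n).
Proof. exact (proj2 (proj2 (proj2_sig (cid (po_ex n))))). Qed.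

Lemma dPo_ex n : exists u : Hom (Poob n) (Poob (n + 1)), an n ;; u = cd (bc A) n ;; an (n + 1) /\ dn n ;; u = cd (bc D) n ;; dn (n + 1).
Proof.
  destruct (po_spec n) as [_ H]. destruct (H _ (cd (bc A) n ;; an (n + 1)) (cd (bc D) n ;; dn (n + 1))) as [u [Hu _]]; eauto.
  rewrite <- !comp_assoc, <- !cm_comm, !comp_assoc. f_equal. apply (po_spec (n + 1)).
Qed.
Definition dPo n := proj1_sig (cid (dPo_ex n)).
Lemma dPo_1 n : an n ;; dPo n = cd (bc A) n ;; an (n + 1).
Proof. exact (proj1 (proj2_sig (cid (dPo_ex n)))). Qed.
Lemma dPo_2 n : dn n ;; dPo n = cd (bc D) n ;; dn (n + 1).
Proof. exact (proj2 (proj2_sig (cid (dPo_ex n)))). Qed.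
Lemma dPo_dd n : zero_mor (dPo n ;; dPo (n + 1)).
Proof.
  apply (po_zero_mor hZ0 _ _ _ _ _ (po_spec n)).
  - rewrite <- comp_assoc, dPo_1, comp_assoc, dPo_1, <- comp_assoc. apply zero_mor_l, cdd.
  - rewrite <- comp_assoc, dPo_2, comp_assoc, dPo_2, <- comp_assoc. apply zero_mor_l, cdd.
Qed.
Definition Pocx : complex E := {| cx := Poob; cd := dPo; cdd := dPo_dd |}.
Lemma Pocx_bnd : bounded Pocx.
Proof.
  destruct (bc_bounded A) as (a1 & b1 & H1). destruct (bc_bounded D) as (a2 & b2 & H2).
  exists (Z.min a1 a2), (Z.max b1 b2). intros n Hn. simpl.
  apply (pushout_zero _ _ _ _ (po_spec n)); [apply H1 | apply H2]; lia.
Qed.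
Definition Poc : bcomplex E := {| bc := Pocx; bc_bounded := Pocx_bnd |}.
Lemma an_comm n : cd (bc A) n ;; an (n + 1) = an n ;; cd (bc Poc) n.
Proof. symmetry. apply dPo_1. Qed.
Lemma dn_comm n : cd (bc D) n ;; dn (n + 1) = dn n ;; cd (bc Poc) n.
Proof. symmetry. apply dPo_2. Qed.
Definition ac : @Hom (Cb E) A Poc := {| cm := an : forall n, Hom _ (cx (bc Poc) n); cm_comm := an_comm |}.
Definition dc : @Hom (Cb E) D Poc := {| cm := dn : forall n, Hom _ (cx (bc Poc) n); cm_comm := dn_comm |}.

Lemma Poc_pushout : is_pushout (C := Cb E) p i ac dc.
Proof.
  split.
  - apply chain_map_ext. intro n. apply (po_spec n).
  - intros W a b Hab.
    assert (Ex : forall n, exists u : Hom (Poob n) (cx (bc W) n), an n ;; u = cm a n /\ dn n ;; u = cm b n).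
    { intro n. destruct (po_spec n) as [_ H]. destruct (H _ (cm a n) (cm b n) (cm_eq Hab n)) as [u [Hu _]]. eauto. }
    set (u := fun n => proj1_sig (cid (Ex n))).
    assert (Hu1 : forall n, an n ;; u n = cm a n) by (intro n; exact (proj1 (proj2_sig (cid (Ex n))))).
    assert (Hu2 : forall n, dn n ;; u n = cm b n) by (intro n; exact (proj2 (proj2_sig (cid (Ex n))))).
    assert (Hc : forall n, cd (bc Poc) n ;; u (n + 1) = u n ;; cd (bc W) n).
    { intro n. apply (pushout_je _ _ _ _ (po_spec n)); simpl; rewrite <- !comp_assoc.
      - rewrite Hu1, dPo_1, comp_assoc, Hu1. apply cm_comm.
      - rewrite Hu2, dPo_2, comp_assoc, Hu2. apply cm_comm. }
    exists {| cm := u : forall n, Hom (cx (bc Poc) n) _; cm_comm := Hc |}. split.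
    + split; apply chain_map_ext; intro n; simpl; auto.
    + intros u' [H1 H2]. apply chain_map_ext. intro n. simpl.
      apply (pushout_je _ _ _ _ (po_spec n)). rewrite Hu1. symmetry. exact (cm_eq H1 n).
      rewrite Hu2. symmetry. exact (cm_eq H2 n).
Qed.
End PoSec.

Lemma cb_P1 : forall (A' A A'' : bcomplex E) (i : @Hom (Cb E) A' A) (p : @Hom (Cb E) A A''),
  cb_confl Cf i p -> (cb_sub inA A <-> (cb_sub inA A' /\ cb_sub inA A'')).
Proof.
  intros A' A A'' i p H. split.
  - intros HA. split; intro n; apply (proj1 (P1E HP _ _ (H n)) (HA n)).
  - intros [H1 H2] n. apply (proj2 (P1E HP _ _ (H n))). auto.
Qed.

Lemma cb_P3 : forall (X D A : bcomplex E) (i : @Hom (Cb E) X D) (p : @Hom (Cb E) X A),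
  inflation (cb_confl Cf) i -> deflation (cb_confl Cf) p -> cb_sub inA A ->
  exists (P : bcomplex E) (a : @Hom (Cb E) A P) (d : @Hom (Cb E) D P),
    is_pushout (C := Cb E) p i a d /\ inflation (cb_confl Cf) a /\ deflation (cb_confl Cf) d.
Proof.
  intros X D A i p Hi Hp HA.
  pose proof (cb_infl_deg _ Hi) as Hin. pose proof (cb_defl_deg _ Hp) as Hpn.
  exists (Poc _ _ _ i p Hin Hpn HA), (ac _ _ _ i p Hin Hpn HA), (dc _ _ _ i p Hin Hpn HA). split; [|split].
  - apply Poc_pushout.
  - apply (infl_lift HRE hZ0). intro n. apply an_infl.
  - apply (defl_lift HRE hZ0). intro n. apply dn_defl.
Qed.

End CbPo.

Local Open Scope Z_scope.
Section CbP2.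
Context {E : Cat} {Cf : seq_class E} {inA : Ob E -> Prop}.
Hypothesis HRE : right_exact Cf.
Hypothesis HP : right_percolating Cf inA.
Context {Z0 : Ob E}.
Hypothesis hZ0 : is_zero Z0.

Section P2Sec.
Variables (X A : bcomplex E) (f : @Hom (Cb E) X A).
Hypothesis HA : forall n, inA (cx (bc A) n).

Definition D2 (n : Z) : Type := {Y : Ob E & {p : Hom (cx (bc X) n) Y & {g : Hom Y (cx (bc A) n) |
  inA Y /\ deflation Cf p /\ p ;; g = cm f n}}}.
Definition Yo {n} (t : D2 n) : Ob E := projT1 t.
Definition po {n} (t : D2 n) : Hom (cx (bc X) n) (Yo t) := projT1 (projT2 t).
Definition go {n} (t : D2 n) : Hom (Yo t) (cx (bc A) n) := proj1_sig (projT2 (projT2 t)).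
Lemma Yo_A {n} (t : D2 n) : inA (Yo t). Proof. exact (proj1 (proj2_sig (projT2 (projT2 t)))). Qed.
Lemma po_defl {n} (t : D2 n) : deflation Cf (po t). Proof. exact (proj1 (proj2 (proj2_sig (projT2 (projT2 t))))). Qed.
Lemma pogo {n} (t : D2 n) : po t ;; go t = cm f n. Proof. exact (proj2 (proj2 (proj2_sig (projT2 (projT2 t))))). Qed.

Definition R2 n (t : D2 n) (s : D2 (n + 1)) : Prop :=
  exists d : Hom (Yo t) (Yo s), po t ;; d = cd (bc X) n ;; po s /\ d ;; go s = go t ;; cd (bc A) n.

Lemma step2 n (s : D2 (n + 1)) : exists t, R2 n t s.
Proof.
  destruct (join HRE HP hZ0 (cm f n) (cd (bc X) n ;; po s) (HA n) (Yo_A s)) as (W & w & h1 & h2 & HW & Hw & H1 & H2).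
  exists (existT _ W (existT _ w (exist _ h1 (conj HW (conj Hw H1))))).
  exists h2. split. exact H2. change (h2 ;; go s = h1 ;; cd (bc A) n).
  apply (defl_epi HRE Hw). rewrite <- comp_assoc, H2, comp_assoc, pogo, (cm_comm f), <- comp_assoc, H1. auto.
Qed.

Lemma P2_cb : exists (A' : bcomplex E) (p : @Hom (Cb E) X A') (g : @Hom (Cb E) A' A),
  cb_sub inA A' /\ deflation (cb_confl Cf) p /\ f = p ;; g.
Proof.
  destruct (bc_bounded X) as (a1 & b1 & HX). destruct (bc_bounded A) as (a2 & b2 & HA0).
  set (N := Z.max b1 b2 + 1).
  assert (HXz : forall n, N <= n -> is_zero (cx (bc X) n)) by (intros n h; apply HX; lia).
  assert (HAz : forall n, N <= n -> is_zero (cx (bc A) n)) by (intros n h; apply HA0; lia).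
  assert (Hb : forall n, N <= n -> inA Z0 /\ deflation Cf (t0 hZ0 (cx (bc X) n)) /\ t0 hZ0 (cx (bc X) n) ;; f0 hZ0 (cx (bc A) n) = cm f n).
  { intros n h. split; [|split].
    - apply (zero_inA HRE HP hZ0 hZ0).
    - apply (zz_defl HRE hZ0); auto.
    - apply zero_from_eq; auto. }
  pose (base := fun n (h : N <= n) => existT _ Z0 (existT _ (t0 hZ0 (cx (bc X) n)) (exist _ (f0 hZ0 (cx (bc A) n)) (Hb n h))) : D2 n).
  assert (baseR : forall n h s, R2 n (base n h) s).
  { intros n h s. exists (f0 hZ0 (Yo s)). unfold po, go, base; simpl. split.
    - apply zero_from_eq; auto.
    - apply zero_from_eq; auto. }
  destruct (down_rec D2 R2 N base baseR step2) as (data & Hrel).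
  set (dd := fun n => proj1_sig (cid (Hrel n))).
  assert (Hd1 : forall n, po (data n) ;; dd n = cd (bc X) n ;; po (data (n + 1))) by (intro n; exact (proj1 (proj2_sig (cid (Hrel n))))).
  assert (Hd2 : forall n, dd n ;; go (data (n + 1)) = go (data n) ;; cd (bc A) n) by (intro n; exact (proj2 (proj2_sig (cid (Hrel n))))).
  assert (Hdd : forall n, zero_mor (dd n ;; dd (n + 1))).
  { intro n. apply (epi_zero_mor hZ0 (po (data n))). apply (defl_epi HRE (po_defl _)).
    rewrite <- comp_assoc, Hd1, comp_assoc, Hd1, <- comp_assoc. apply zero_mor_l, cdd. }
  set (Acx := {| cx := fun n => Yo (data n); cd := dd; cdd := Hdd |} : complex E).
  assert (Hbnd : bounded Acx).
  { exists a1, b1. intros n Hn. simpl. apply (epi_zero (po (data n))). apply HX; auto.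
    apply (defl_epi HRE (po_defl _)). }
  set (Ac := {| bc := Acx; bc_bounded := Hbnd |}).
  assert (Hpc : forall n, cd (bc X) n ;; po (data (n + 1)) = po (data n) ;; cd (bc Ac) n) by (intro n; symmetry; apply Hd1).
  assert (Hgc : forall n, cd (bc Ac) n ;; go (data (n + 1)) = go (data n) ;; cd (bc A) n) by (intro n; apply Hd2).
  exists Ac, {| cm := fun n => po (data n) : Hom _ (cx (bc Ac) n); cm_comm := Hpc |},
    {| cm := fun n => go (data n) : Hom (cx (bc Ac) n) _; cm_comm := Hgc |}.
  split; [|split].
  - intro n. apply Yo_A.
  - apply (defl_lift HRE hZ0). intro n. apply po_defl.
  - apply chain_map_ext. intro n. simpl. symmetry. apply pogo.
Qed.
End P2Sec.
End CbP2.

Local Open Scope Z_scope.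
Section CbP4.
Context {E : Cat} {Cf : seq_class E} {inA : Ob E -> Prop}.
Hypothesis HRE : right_exact Cf.
Hypothesis HP : right_percolating Cf inA.
Context {Z0 : Ob E}.
Hypothesis hZ0 : is_zero Z0.

Section P4Sec.
Variables (A X B : bcomplex E) (a : @Hom (Cb E) A X) (b : @Hom (Cb E) X B).
Hypothesis HA : forall n, inA (cx (bc A) n).
Hypothesis HB : forall n, inA (cx (bc B) n).
Hypothesis Ha : forall n, inflation Cf (cm a n).
Hypothesis Hb : forall n, deflation Cf (cm b n).

Record st4 (n : Z) := {
  B'o : Ob E; A'o : Ob E;
  rr : Hom (cx (bc X) n) B'o; ss : Hom B'o (cx (bc B) n);
  qq : Hom (cx (bc A) n) A'o; jj : Hom A'o B'o;
  st_B : inA B'o; st_A : inA A'o;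
  st_r : deflation Cf rr; st_q : deflation Cf qq; st_j : inflation Cf jj;
  st_c1 : cm a n ;; rr = qq ;; jj; st_c2 : cm b n = rr ;; ss }.
Arguments B'o {n}. Arguments A'o {n}. Arguments rr {n}. Arguments ss {n}.
Arguments qq {n}. Arguments jj {n}. Arguments st_B {n}. Arguments st_A {n}.
Arguments st_r {n}. Arguments st_q {n}. Arguments st_j {n}. Arguments st_c1 {n}. Arguments st_c2 {n}.

Definition R4 n (t : st4 n) (s : st4 (n + 1)) : Prop :=
  exists (dB : Hom (B'o t) (B'o s)) (dA : Hom (A'o t) (A'o s)),
    rr t ;; dB = cd (bc X) n ;; rr s /\ ss t ;; cd (bc B) n = dB ;; ss s /\
    qq t ;; dA = cd (bc A) n ;; qq s /\ jj t ;; dB = dA ;; jj s.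

Lemma step4 n (s : st4 (n + 1)) : exists t, R4 n t s.
Proof.
  destruct (join HRE HP hZ0 (cm b n) (cd (bc X) n ;; rr s) (HB n) (st_B s)) as (W & w & be & ga & HW & Hw & H1 & H2).
  destruct (P4E HP (cm a n) w (HA n) HW (Ha n) Hw) as (A' & B' & q & r & j & s' & HA' & HB' & Hq & Hr & Hj & Hc1 & Hc2).
  assert (Hc2' : cm b n = r ;; (s' ;; be)) by (rewrite <- comp_assoc, <- Hc2; auto).
  exists {| B'o := B'; A'o := A'; rr := r; ss := s' ;; be; qq := q; jj := j;
    st_B := HB'; st_A := HA'; st_r := Hr; st_q := Hq; st_j := Hj; st_c1 := Hc1; st_c2 := Hc2' |}.
  pose proof Hq as (K & ka & Hka).
  assert (Hz : zero_mor (ka ;; (cd (bc A) n ;; qq s))).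
  { apply (mono_zero_mor hZ0 _ (jj s)). apply (infl_mono HRE (st_j s)).
    assert (Eq : ka ;; (cd (bc A) n ;; qq s) ;; jj s = ka ;; q ;; (j ;; s' ;; ga)).
    { rewrite !comp_assoc, <- (st_c1 s), <- (comp_assoc (cd (bc A) n)), (cm_comm a).
      rewrite !comp_assoc, <- H2, Hc2, !comp_assoc, <- (comp_assoc (cm a n)), Hc1, !comp_assoc. auto. }
    rewrite Eq. apply zero_mor_l. apply (conf_kc HRE Hka). }
  destruct (conf_kc HRE Hka) as [_ [_ Hcok]].
  destruct (Hcok _ _ Hz) as [dA [HdA _]].
  exists (s' ;; ga), dA. simpl. split; [|split; [|split]].
  - rewrite <- comp_assoc, <- Hc2. auto.
  - apply (defl_epi HRE Hr). rewrite <- !comp_assoc, <- Hc2, H1, H2.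
    rewrite <- (cm_comm b), (st_c2 s), comp_assoc. auto.
  - auto.
  - apply (defl_epi HRE Hq). rewrite <- !comp_assoc, <- Hc1, HdA, (comp_assoc (cm a n) r s'), <- Hc2.
    rewrite comp_assoc, H2, <- comp_assoc, <- (cm_comm a), !comp_assoc, (st_c1 s). auto.
Qed.

Lemma P4_cb : exists (A' B' : bcomplex E) (q : @Hom (Cb E) A A') (r : @Hom (Cb E) X B')
    (j : @Hom (Cb E) A' B') (s : @Hom (Cb E) B' B),
    cb_sub inA A' /\ cb_sub inA B' /\ deflation (cb_confl Cf) q /\ deflation (cb_confl Cf) r /\
    inflation (cb_confl Cf) j /\ a ;; r = q ;; j /\ b = r ;; s.
Proof.
  destruct (bc_bounded X) as (a1 & b1 & HX). destruct (bc_bounded A) as (a2 & b2 & HA0).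
  destruct (bc_bounded B) as (a3 & b3 & HB0).
  set (N := Z.max b1 (Z.max b2 b3) + 1).
  assert (HXz : forall n, N <= n -> is_zero (cx (bc X) n)) by (intros n h; apply HX; lia).
  assert (HAz : forall n, N <= n -> is_zero (cx (bc A) n)) by (intros n h; apply HA0; lia).
  assert (HBz : forall n, N <= n -> is_zero (cx (bc B) n)) by (intros n h; apply HB0; lia).
  pose proof (zero_inA HRE HP hZ0 hZ0) as HZA.
  pose (base := fun n (h : N <= n) =>
    {| B'o := Z0; A'o := Z0; rr := t0 hZ0 (cx (bc X) n); ss := f0 hZ0 (cx (bc B) n);
       qq := t0 hZ0 (cx (bc A) n); jj := idm Z0;
       st_B := HZA; st_A := HZA;
       st_r := zz_defl HRE hZ0 _ (HXz n h) hZ0; st_q := zz_defl HRE hZ0 _ (HAz n h) hZ0;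
       st_j := zz_infl HRE hZ0 (idm Z0) hZ0 hZ0;
       st_c1 := zero_to_eq hZ0 _ _; st_c2 := zero_from_eq (HXz n h) _ _ |} : st4 n).
  assert (baseR : forall n h s, R4 n (base n h) s).
  { intros n h s. exists (f0 hZ0 (B'o s)), (f0 hZ0 (A'o s)). simpl.
    split; [|split; [|split]]; apply zero_from_eq; auto. }
  destruct (down_rec st4 R4 N base baseR step4) as (data & Hrel).
  set (dB := fun n => proj1_sig (cid (Hrel n))).
  assert (HdB : forall n, exists dA : Hom (A'o (data n)) (A'o (data (n + 1))),
    rr (data n) ;; dB n = cd (bc X) n ;; rr (data (n + 1)) /\ ss (data n) ;; cd (bc B) n = dB n ;; ss (data (n + 1)) /\
    qq (data n) ;; dA = cd (bc A) n ;; qq (data (n + 1)) /\ jj (data n) ;; dB n = dA ;; jj (data (n + 1))).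
  { intro n. exact (proj2_sig (cid (Hrel n))). }
  set (dA := fun n => proj1_sig (cid (HdB n))).
  assert (H1 : forall n, rr (data n) ;; dB n = cd (bc X) n ;; rr (data (n + 1))) by (intro n; exact (proj1 (proj2_sig (cid (HdB n))))).
  assert (H2 : forall n, ss (data n) ;; cd (bc B) n = dB n ;; ss (data (n + 1))) by (intro n; exact (proj1 (proj2 (proj2_sig (cid (HdB n)))))).
  assert (H3 : forall n, qq (data n) ;; dA n = cd (bc A) n ;; qq (data (n + 1))) by (intro n; exact (proj1 (proj2 (proj2 (proj2_sig (cid (HdB n))))))).
  assert (H4 : forall n, jj (data n) ;; dB n = dA n ;; jj (data (n + 1))) by (intro n; exact (proj2 (proj2 (proj2 (proj2_sig (cid (HdB n))))))).
  assert (HddB : forall n, zero_mor (dB n ;; dB (n + 1))).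
  { intro n. apply (epi_zero_mor hZ0 (rr (data n))). apply (defl_epi HRE (st_r _)).
    rewrite <- comp_assoc, H1, comp_assoc, H1, <- comp_assoc. apply zero_mor_l, cdd. }
  assert (HddA : forall n, zero_mor (dA n ;; dA (n + 1))).
  { intro n. apply (epi_zero_mor hZ0 (qq (data n))). apply (defl_epi HRE (st_q _)).
    rewrite <- comp_assoc, H3, comp_assoc, H3, <- comp_assoc. apply zero_mor_l, cdd. }
  set (Bcx := {| cx := fun n => B'o (data n); cd := dB; cdd := HddB |} : complex E).
  set (Acx := {| cx := fun n => A'o (data n); cd := dA; cdd := HddA |} : complex E).
  assert (HbB : bounded Bcx).
  { exists a1, b1. intros n Hn. simpl. apply (epi_zero (rr (data n))). apply HX; auto.
    apply (defl_epi HRE (st_r _)). }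
  assert (HbA : bounded Acx).
  { exists a2, b2. intros n Hn. simpl. apply (epi_zero (qq (data n))). apply HA0; auto.
    apply (defl_epi HRE (st_q _)). }
  set (Bc := {| bc := Bcx; bc_bounded := HbB |}).
  set (Ac := {| bc := Acx; bc_bounded := HbA |}).
  assert (Cq : forall n, cd (bc A) n ;; qq (data (n + 1)) = qq (data n) ;; cd (bc Ac) n) by (intro n; symmetry; apply H3).
  assert (Cr : forall n, cd (bc X) n ;; rr (data (n + 1)) = rr (data n) ;; cd (bc Bc) n) by (intro n; symmetry; apply H1).
  assert (Cj : forall n, cd (bc Ac) n ;; jj (data (n + 1)) = jj (data n) ;; cd (bc Bc) n) by (intro n; symmetry; apply H4).
  assert (Cs : forall n, cd (bc Bc) n ;; ss (data (n + 1)) = ss (data n) ;; cd (bc B) n) by (intro n; symmetry; apply H2).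
  exists Ac, Bc,
    {| cm := fun n => qq (data n) : Hom _ (cx (bc Ac) n); cm_comm := Cq |},
    {| cm := fun n => rr (data n) : Hom _ (cx (bc Bc) n); cm_comm := Cr |},
    {| cm := fun n => jj (data n) : Hom (cx (bc Ac) n) (cx (bc Bc) n); cm_comm := Cj |},
    {| cm := fun n => ss (data n) : Hom (cx (bc Bc) n) _; cm_comm := Cs |}.
  split; [|split; [|split; [|split; [|split; [|split]]]]].
  - intro n. apply st_A.
  - intro n. apply st_B.
  - apply (defl_lift HRE hZ0). intro n. apply st_q.
  - apply (defl_lift HRE hZ0). intro n. apply st_r.
  - apply (infl_lift HRE hZ0). intro n. apply st_j.
  - apply chain_map_ext. intro n. apply st_c1.
  - apply chain_map_ext. intro n. apply st_c2.
Qed.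
End P4Sec.
End CbP4.

Theorem proposition4p12 (E : Cat) (Cf : seq_class E) (inA : Ob E -> Prop) :
  right_exact Cf -> right_percolating Cf inA ->
  right_exact (cb_confl Cf) /\ right_percolating (cb_confl Cf) (cb_sub inA).
Proof.
  intros HRE HP. destruct (proj1 (proj1 (proj1 HRE))) as [Z0 hZ0].
  split. apply (cb_right_exact HRE hZ0).
  split; [| split; [| split; [| split]]].
  - exists (Z0c hZ0). intro n. apply (zero_inA HRE HP hZ0 hZ0).
  - apply (cb_P1 HP).
  - intros X A f HA. apply (P2_cb HRE HP hZ0 X A f HA).
  - apply (cb_P3 HRE HP hZ0).
  - intros A X B a b HA HB Ha Hb.
    apply (P4_cb HRE HP hZ0 A X B a b HA HB (cb_infl_deg _ Ha)).
Qed.
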